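(* The Riemannian manifold $(\mathbb{R}^2,\,e^{\,y-x^2}(dx^2+dy^2))$ admits no non-constant equilibrium function, and hence no equilibrium partition.
   Context: For a metric $h$ on $\mathbb{R}^2$, a real-analytic function $I:\mathbb{R}^2\to\mathbb{R}$ is an equilibrium function of $(\mathbb{R}^2,h)$ if $(\nabla_h I)^2$ and $\Delta_h I$ are constant on each connected component of each level set of $I$. Here $\nabla_h$ is the gradient of $h$ and $\Delta_h$ is the Laplace–Beltrami operator of $h$. *)

(* Defs.v *)
From Stdlib Require Import Reals.
From Coquelicot Require Import Coquelicot.
Open Scope R_scope.

Definition partial_x (f : R * R -> R) (p : R * R) : R :=
  Derive (fun t => f (t, snd p)) (fst p).
Definition partial_y (f : R * R -> R) (p : R * R) : R :=
  Derive (fun t => f (fst p, t)) (snd p).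

(* Real-analytic on R^2: near every point, f is the sum of an absolutely
   convergent double power series (partial sums over squares). *)
Definition real_analytic2 (f : R * R -> R) : Prop :=
  forall p0 : R * R, exists r : R, 0 < r /\
  exists a : nat -> nat -> R,
  forall p : R * R,
    Rabs (fst p - fst p0) < r -> Rabs (snd p - snd p0) < r ->
    (exists M : R, forall N : nat,
        sum_n (fun m => sum_n (fun n =>
          Rabs (a m n) * Rabs (fst p - fst p0) ^ m * Rabs (snd p - snd p0) ^ n) N) N
        <= M) /\
    is_lim_seq (fun N => sum_n (fun m => sum_n (fun n =>
          a m n * (fst p - fst p0) ^ m * (snd p - snd p0) ^ n) N) N) (f p).

Definition connected2 (A : R * R -> Prop) : Prop :=
  forall U V : R * R -> Prop, open U -> open V ->
    (forall z, A z -> U z \/ V z) ->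
    (forall z, ~ (A z /\ U z /\ V z)) ->
    (forall z, ~ (A z /\ U z)) \/ (forall z, ~ (A z /\ V z)).

Definition same_level_component (I : R * R -> R) (p q : R * R) : Prop :=
  exists A : R * R -> Prop,
    connected2 A /\ A p /\ A q /\ (forall z, A z -> I z = I p).

(* A Riemannian metric on R^2 given by components h = E dx^2 + 2F dx dy + G dy^2. *)
Section Metric.
Variables E F G : R * R -> R.

Definition metric_det (p : R * R) : R := E p * G p - F p ^ 2.

(* (nabla_h I)^2 = h^{ij} d_i I d_j I *)
Definition grad_norm2 (I : R * R -> R) (p : R * R) : R :=
  (G p * partial_x I p ^ 2 - 2 * F p * partial_x I p * partial_y I p
   + E p * partial_y I p ^ 2) / metric_det p.

(* Laplace-Beltrami: 1/sqrt|h| d_i (sqrt|h| h^{ij} d_j I) *)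
Definition laplace_beltrami (I : R * R -> R) (p : R * R) : R :=
  / sqrt (metric_det p) *
  ( partial_x (fun q => sqrt (metric_det q) *
        ((G q * partial_x I q - F q * partial_y I q) / metric_det q)) p
  + partial_y (fun q => sqrt (metric_det q) *
        ((- F q * partial_x I q + E q * partial_y I q) / metric_det q)) p ).

Definition equilibrium_function (I : R * R -> R) : Prop :=
  real_analytic2 I /\
  forall p q : R * R, same_level_component I p q ->
    grad_norm2 I p = grad_norm2 I q /\
    laplace_beltrami I p = laplace_beltrami I q.
End Metric.

Definition conf_factor (p : R * R) : R := exp (snd p - fst p ^ 2).
Definition zero_fun (p : R * R) : R := 0.

(* Main.v *)
Require Import Defs.
From Stdlib Require Import Reals.
From Coquelicot Require Import Coquelicot.
Open Scope R_scope.
From Stdlib Require Import Lra Lia Classical IndefiniteDescription.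
Open Scope R_scope.

Lemma sumS (a : nat -> R) n : sum_n a (S n) = sum_n a n + a (S n).
Proof. rewrite sum_Sn; reflexivity. Qed.
Lemma sum0 (a : nat -> R) : sum_n a 0 = a 0%nat.
Proof. rewrite sum_O; reflexivity. Qed.

Lemma sum_le (a b : nat -> R) N : (forall k, a k <= b k) -> sum_n a N <= sum_n b N.
Proof.
  intro H; induction N. rewrite !sum0; auto.
  rewrite !sumS; specialize (H (S N)); lra.
Qed.

Lemma sum_nonneg (a : nat -> R) N : (forall k, 0 <= a k) -> 0 <= sum_n a N.
Proof.
  intro H; induction N. rewrite sum0; auto.
  rewrite sumS; specialize (H (S N)); lra.
Qed.

Lemma sum_mono (a : nat -> R) N N' : (forall k, 0 <= a k) -> (N <= N')%nat -> sum_n a N <= sum_n a N'.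
Proof.
  intros H HN; induction HN. lra.
  rewrite sumS; specialize (H (S m)); lra.
Qed.

Lemma term_le (a : nat -> R) k N : (forall k, 0 <= a k) -> (k <= N)%nat -> a k <= sum_n a N.
Proof.
  intros H HN; induction HN.
  destruct k. rewrite sum0; lra. rewrite sumS. pose proof (sum_nonneg a k H); lra.
  rewrite sumS; specialize (H (S m)); lra.
Qed.

Lemma sum_abs (a : nat -> R) N : Rabs (sum_n a N) <= sum_n (fun k => Rabs (a k)) N.
Proof.
  induction N. rewrite !sum0; lra.
  rewrite !sumS. pose proof (Rabs_triang (sum_n a N) (a (S N))); lra.
Qed.

Lemma sum_shift (a : nat -> R) N : sum_n a (S N) = a 0%nat + sum_n (fun k => a (S k)) N.
Proof.
  induction N. rewrite sumS, !sum0; lra.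
  rewrite sumS, IHN, (sumS (fun k => a (S k))); lra.
Qed.

Lemma sum_ext (a b : nat -> R) N : (forall k, a k = b k) -> sum_n a N = sum_n b N.
Proof. apply sum_n_ext. Qed.

Lemma sum_plus (a b : nat -> R) N : sum_n (fun k => a k + b k) N = sum_n a N + sum_n b N.
Proof. induction N. rewrite !sum0; lra. rewrite !sumS; lra. Qed.

Lemma sum_scal (c : R) (a : nat -> R) N : sum_n (fun k => c * a k) N = c * sum_n a N.
Proof. induction N. rewrite !sum0; lra. rewrite !sumS; nra. Qed.

Lemma sum_opp (a : nat -> R) N : sum_n (fun k => - a k) N = - sum_n a N.
Proof. induction N. rewrite !sum0; lra. rewrite !sumS; lra. Qed.

Lemma sum_zero N : sum_n (fun _ => 0) N = 0.
Proof. induction N. rewrite sum0; lra. rewrite sumS; lra. Qed.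

Lemma is_series_lim (a : nat -> R) l : is_series a l <-> is_lim_seq (sum_n a) l.
Proof. split; intro H; exact H. Qed.

Lemma ex_series_pos_bnd (a : nat -> R) M :
  (forall k, 0 <= a k) -> (forall N, sum_n a N <= M) ->
  ex_series a /\ Series a <= M /\ (forall N, sum_n a N <= Series a).
Proof.
  intros Hp HM.
  assert (Hf : ex_finite_lim_seq (sum_n a)).
  { apply ex_finite_lim_seq_incr with M; auto.
    intro n; rewrite sumS; specialize (Hp (S n)); lra. }
  destruct Hf as [l HL].
  assert (HS : Series a = l).
  { unfold Series. rewrite (is_lim_seq_unique _ _ HL). reflexivity. }
  rewrite HS.
  split. exists l; exact HL. split.
  - assert (Rbar_le l M).
    { apply is_lim_seq_le with (sum_n a) (fun _ => M); auto. apply is_lim_seq_const. }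
    exact H.
  - intro N.
    assert (Rbar_le (sum_n a N) l).
    { apply is_lim_seq_le_loc with (fun _ => sum_n a N) (sum_n a); auto.
      exists N; intros n Hn; apply sum_mono; auto. apply is_lim_seq_const. }
    exact H.
Qed.

Lemma tail_bound (u : nat -> R) N :
  ex_series (fun k => Rabs (u k)) ->
  Rabs (Series u - sum_n u N) <= Series (fun k => Rabs (u k)) - sum_n (fun k => Rabs (u k)) N.
Proof.
  intro Ha.
  assert (Hu : ex_series u) by (apply ex_series_Rabs; auto).
  pose proof (Series_correct _ Hu) as H1. pose proof (Series_correct _ Ha) as H2.
  apply is_series_lim in H1. apply is_series_lim in H2.
  assert (H3 : is_lim_seq (fun K => Rabs (sum_n u K - sum_n u N)) (Rabs (Series u - sum_n u N))).
  { apply (is_lim_seq_abs _ (Finite (Series u - sum_n u N))).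
    apply is_lim_seq_minus'; auto. apply is_lim_seq_const. }
  assert (H4 : is_lim_seq (fun K => sum_n (fun k => Rabs (u k)) K - sum_n (fun k => Rabs (u k)) N)
                (Series (fun k => Rabs (u k)) - sum_n (fun k => Rabs (u k)) N)).
  { apply is_lim_seq_minus'; auto. apply is_lim_seq_const. }
  assert (Rbar_le (Rabs (Series u - sum_n u N)) (Series (fun k => Rabs (u k)) - sum_n (fun k => Rabs (u k)) N)).
  { apply is_lim_seq_le_loc with (2 := H3) (3 := H4).
    exists N. intros K HK.
    clear -HK. induction HK. rewrite !Rminus_diag, Rabs_R0; lra.
    rewrite !sumS. pose proof (Rabs_triang (sum_n u m - sum_n u N) (u (S m))).
    replace (sum_n u m + u (S m) - sum_n u N) with (sum_n u m - sum_n u N + u (S m)) by ring. lra. }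
  exact H.
Qed.

Lemma series_lim (a : nat -> R) : ex_series a -> is_lim_seq (sum_n a) (Series a).
Proof. intro H. pose proof (Series_correct _ H) as H1. exact H1. Qed.

Lemma tail_bound2 (u b : nat -> R) N :
  ex_series u -> ex_series b -> (forall k, Rabs (u k) <= b k) ->
  Rabs (Series u - sum_n u N) <= Series b - sum_n b N.
Proof.
  intros Hu Ha Hub.
  pose proof (series_lim _ Hu) as H1. pose proof (series_lim _ Ha) as H2.
  assert (H3 : is_lim_seq (fun K => Rabs (sum_n u K - sum_n u N)) (Rabs (Series u - sum_n u N))).
  { apply (is_lim_seq_abs _ (Finite (Series u - sum_n u N))).
    apply is_lim_seq_minus'; auto. apply is_lim_seq_const. }
  assert (H4 : is_lim_seq (fun K => sum_n b K - sum_n b N)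
                (Series b - sum_n b N)).
  { apply is_lim_seq_minus'; auto. apply is_lim_seq_const. }
  assert (Rbar_le (Rabs (Series u - sum_n u N)) (Series b - sum_n b N)).
  { apply is_lim_seq_le_loc with (2 := H3) (3 := H4).
    exists N. intros K HK.
    clear -HK Hub. induction HK. rewrite !Rminus_diag, Rabs_R0; lra.
    rewrite !sumS. pose proof (Rabs_triang (sum_n u m - sum_n u N) (u (S m))).
    specialize (Hub (S m)).
    replace (sum_n u m + u (S m) - sum_n u N) with (sum_n u m - sum_n u N + u (S m)) by ring. lra. }
  exact H.
Qed.

Definition SQ (c : nat -> nat -> R) N := sum_n (fun m => sum_n (fun n => c m n) N) N.
Definition DS (c : nat -> nat -> R) := Series (fun m => Series (fun n => c m n)).
Definition absc (c : nat -> nat -> R) := fun m n => Rabs (c m n).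

Lemma lim_fin_sum (f : nat -> nat -> R) (l : nat -> R) K :
  (forall m, is_lim_seq (fun N => f m N) (l m)) ->
  is_lim_seq (fun N => sum_n (fun m => f m N) K) (sum_n l K).
Proof.
  intro H. induction K.
  - rewrite sum0. apply is_lim_seq_ext with (fun N => f 0%nat N); auto.
    intro; rewrite sum0; auto.
  - rewrite sumS. apply is_lim_seq_ext with (fun N => sum_n (fun m => f m N) K + f (S K) N).
    intro; rewrite sumS; auto.
    apply is_lim_seq_plus'; auto.
Qed.

Lemma sq_mono (c : nat -> nat -> R) K N :
  (forall m n, 0 <= c m n) ->
  sum_n (fun m => sum_n (fun n => c m n) N) K <= SQ c (Nat.max K N).
Proof.
  intro Hc. unfold SQ.
  apply Rle_trans with (sum_n (fun m => sum_n (fun n => c m n) (Nat.max K N)) K).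
  - apply sum_le. intro m. apply sum_mono; auto. lia.
  - apply sum_mono. intro m. apply sum_nonneg; auto. lia.
Qed.

Lemma dseries (c : nat -> nat -> R) M :
  (forall N, SQ (absc c) N <= M) ->
  (forall m, ex_series (fun n => c m n)) /\ is_lim_seq (SQ c) (DS c) /\ Rabs (DS c) <= M.
Proof.
  intro Hb.
  assert (Hpos : forall m n, 0 <= absc c m n) by (intros; apply Rabs_pos).
  assert (Hrect : forall K N, sum_n (fun m => sum_n (fun n => absc c m n) N) K <= M).
  { intros K N. eapply Rle_trans. apply sq_mono; auto. apply Hb. }
  assert (Hrow : forall m N, sum_n (fun n => absc c m n) N <= M).
  { intros m N. eapply Rle_trans. 2: apply (Hrect m N).
    apply (term_le (fun m => sum_n (fun n => absc c m n) N)); auto.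
    intro; apply sum_nonneg; auto. }
  set (T := fun m => Series (fun n => absc c m n)).
  assert (HT : forall m, ex_series (fun n => absc c m n) /\ T m <= M /\
                 (forall N, sum_n (fun n => absc c m n) N <= T m)).
  { intro m. apply ex_series_pos_bnd; auto. }
  assert (HTlim : forall m, is_lim_seq (fun N => sum_n (fun n => absc c m n) N) (T m)).
  { intro m. apply series_lim. apply HT. }
  assert (HTK : forall K, sum_n T K <= M).
  { intro K. pose proof (lim_fin_sum _ _ K HTlim) as HL.
    assert (Rbar_le (sum_n T K) M).
    { apply is_lim_seq_le with (2 := HL) (3 := is_lim_seq_const M).
      intro N; apply Hrect. }
    exact H. }
  assert (HTpos : forall m, 0 <= T m).
  { intro m. apply Rle_trans with (sum_n (fun n => absc c m n) 0). apply sum_nonneg; auto. apply HT. }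
  destruct (ex_series_pos_bnd T M HTpos HTK) as [HexT [HTM HTle]].
  set (A := Series T).
  assert (Hrowc : forall m, ex_series (fun n => c m n)).
  { intro m. apply ex_series_Rabs. apply HT. }
  set (V := fun m => Series (fun n => c m n)).
  assert (HVT : forall m, Rabs (V m) <= T m).
  { intro m. apply Series_Rabs. apply HT. }
  assert (HexV : ex_series V).
  { apply (ex_series_le (K:=R_AbsRing) (V:=R_CompleteNormedModule)) with T; auto. }
  set (S := SQ (absc c)).
  assert (HSA : forall N, S N <= sum_n T N).
  { intro N. apply sum_le. intro m. apply HT. }
  assert (HTA : forall N, sum_n T N <= A) by apply HTle.
  assert (HSlim : is_lim_seq S A).
  { apply is_lim_seq_spec. intro eps.
    pose proof (series_lim _ HexT) as HA.
    apply is_lim_seq_spec in HA.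
    assert (He2 : 0 < eps / 2) by (destruct eps; simpl; lra).
    destruct (HA (mkposreal _ He2)) as [K HK]. simpl in HK.
    specialize (HK K (Nat.le_refl _)).
    pose proof (lim_fin_sum _ _ K HTlim) as HL. apply is_lim_seq_spec in HL.
    destruct (HL (mkposreal _ He2)) as [N0 HN0]. simpl in HN0.
    exists (Nat.max K N0). intros N HN.
    specialize (HN0 N ltac:(lia)).
    assert (H1 : sum_n (fun m => sum_n (fun n => absc c m n) N) K <= S N).
    { unfold S, SQ. apply sum_mono. intro; apply sum_nonneg; auto. lia. }
    specialize (HSA N); specialize (HTA N).
    fold A in HK.
    apply Rabs_lt_between'. split.
    - apply Rabs_lt_between' in HK. apply Rabs_lt_between' in HN0. lra.
    - lra. }
  assert (Herr : forall N, Rabs (SQ c N - DS c) <= A - S N).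
  { intro N.
    assert (E : SQ c N - DS c = sum_n (fun m => sum_n (fun n => c m n) N - V m) N + (sum_n V N - Series V)).
    { unfold SQ, DS. fold V. rewrite (sum_ext (fun m => sum_n (fun n => c m n) N - V m) (fun m => sum_n (fun n => c m n) N + - V m)).
      rewrite sum_plus, sum_opp. ring. intro; ring. }
    rewrite E.
    eapply Rle_trans. apply Rabs_triang.
    assert (E1 : Rabs (sum_n (fun m => sum_n (fun n => c m n) N - V m) N) <= sum_n T N - S N).
    { eapply Rle_trans. apply sum_abs.
      unfold S, SQ. unfold Rminus at 2. rewrite <- (sum_opp (fun m => sum_n (fun n => absc c m n) N)), <- sum_plus.
      apply sum_le. intro m. rewrite Rabs_minus_sym.
      pose proof (tail_bound2 (fun n => c m n) (fun n => absc c m n) N (Hrowc m) (proj1 (HT m))) as Hq.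
      unfold V, T. apply Rle_trans with (1 := Hq ltac:(intro; apply Rle_refl)). lra. }
    assert (E2 : Rabs (sum_n V N - Series V) <= A - sum_n T N).
    { rewrite Rabs_minus_sym. apply tail_bound2; auto. }
    lra. }
  split; [auto | split].
  - apply is_lim_seq_ext with (fun N => DS c + (SQ c N - DS c)). intro; ring.
    replace (Finite (DS c)) with (Finite (DS c + 0)) by (f_equal; ring).
    apply is_lim_seq_plus'. apply is_lim_seq_const.
    apply is_lim_seq_spec. intro eps.
    apply is_lim_seq_spec in HSlim. destruct (HSlim eps) as [N0 HN0].
    exists N0. intros N HN. specialize (HN0 N HN). specialize (Herr N).
    rewrite Rminus_0_r. apply Rle_lt_trans with (1 := Herr).
    apply Rabs_lt_between' in HN0. lra.
  - assert (Hl : is_lim_seq (fun N => Rabs (SQ c N)) (Rabs (DS c))).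
    { apply (is_lim_seq_abs _ (Finite (DS c))).
      apply is_lim_seq_ext with (fun N => DS c + (SQ c N - DS c)). intro; ring.
      replace (Finite (DS c)) with (Finite (DS c + 0)) by (f_equal; ring).
      apply is_lim_seq_plus'. apply is_lim_seq_const.
      apply is_lim_seq_spec. intro eps.
      apply is_lim_seq_spec in HSlim. destruct (HSlim eps) as [N0 HN0].
      exists N0. intros N HN. specialize (HN0 N HN). specialize (Herr N).
      rewrite Rminus_0_r. apply Rle_lt_trans with (1 := Herr).
      apply Rabs_lt_between' in HN0. lra. }
    assert (Rbar_le (Rabs (DS c)) M).
    { apply is_lim_seq_le with (2 := Hl) (3 := is_lim_seq_const M).
      intro N. eapply Rle_trans. 2: apply (Hb N). unfold SQ, absc.
      eapply Rle_trans. apply sum_abs. apply sum_le. intro m. apply sum_abs. }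
    exact H.
Qed.

Lemma SQ_tr (c : nat -> nat -> R) N : SQ (fun m n => c n m) N = SQ c N.
Proof. unfold SQ. symmetry. apply (sum_n_switch (G:=R_AbelianMonoid)). Qed.

Lemma DS_tr (c : nat -> nat -> R) M :
  (forall N, SQ (absc c) N <= M) -> DS c = DS (fun m n => c n m).
Proof.
  intro Hb.
  destruct (dseries c M Hb) as [_ [H1 _]].
  assert (Hb' : forall N, SQ (absc (fun m n => c n m)) N <= M).
  { intro N. unfold absc. rewrite (SQ_tr (fun m n => Rabs (c m n))). apply Hb. }
  destruct (dseries _ M Hb') as [_ [H2 _]].
  apply is_lim_seq_ext with (v := SQ c) in H2. 2: intro; apply SQ_tr.
  apply is_lim_seq_unique in H1. apply is_lim_seq_unique in H2.
  rewrite H1 in H2. injection H2; auto.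
Qed.

Lemma mvt (f df : R -> R) a b :
  (forall t, Rmin a b <= t <= Rmax a b -> is_derive f t (df t)) ->
  exists c, Rmin a b <= c <= Rmax a b /\ f b - f a = df c * (b - a).
Proof.
  intro H. apply MVT_gen.
  - intros t Ht. apply H; lra.
  - intros t Ht. apply continuity_pt_filterlim.
    apply (ex_derive_continuous (K:=R_AbsRing) (V:=R_NormedModule)).
    eexists; apply H; auto.
Qed.

Definition DS_ext (c d : nat -> nat -> R) : (forall m n, c m n = d m n) -> DS c = DS d.
Proof. intro H. unfold DS. apply Series_ext. intro m. apply Series_ext. intro n. auto. Qed.

Definition ps (a : nat -> nat -> R) (X Y : R) := DS (fun m n => a m n * X ^ m * Y ^ n).
Definition AB (a : nat -> nat -> R) (rho : R) :=
  exists M, forall N, SQ (fun m n => Rabs (a m n) * rho ^ m * rho ^ n) N <= M.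
Definition AN (a : nat -> nat -> R) (r : R) := forall rho, 0 <= rho < r -> AB a rho.

Definition dxa (a : nat -> nat -> R) := fun m n => INR (S m) * a (S m) n.
Definition tra (a : nat -> nat -> R) := fun m n => a n m.
Definition dya (a : nat -> nat -> R) := fun m n => INR (S n) * a m (S n).

Lemma pow_abs_le X rho k : Rabs X <= rho -> Rabs (X ^ k) <= rho ^ k.
Proof. intro H. rewrite <- RPow_abs. apply pow_incr. split; auto. apply Rabs_pos. Qed.

Lemma ps_terms_bound a rho X Y M :
  Rabs X <= rho -> Rabs Y <= rho ->
  (forall N, SQ (fun m n => Rabs (a m n) * rho ^ m * rho ^ n) N <= M) ->
  forall N, SQ (absc (fun m n => a m n * X ^ m * Y ^ n)) N <= M.
Proof.
  intros HX HY H N. eapply Rle_trans. 2: apply (H N).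
  unfold SQ, absc. apply sum_le; intro m. apply sum_le; intro n.
  rewrite !Rabs_mult.
  pose proof (pow_abs_le X rho m HX). pose proof (pow_abs_le Y rho n HY).
  apply Rmult_le_compat. apply Rmult_le_pos; apply Rabs_pos. apply Rabs_pos.
  apply Rmult_le_compat_l. apply Rabs_pos. auto. auto.
Qed.

Lemma ps_bound a rho X Y M :
  Rabs X <= rho -> Rabs Y <= rho ->
  (forall N, SQ (fun m n => Rabs (a m n) * rho ^ m * rho ^ n) N <= M) ->
  Rabs (ps a X Y) <= M.
Proof.
  intros HX HY H. unfold ps.
  destruct (dseries _ M (ps_terms_bound a rho X Y M HX HY H)) as [_ [_ Hb]]. auto.
Qed.

Lemma AB_nonneg_rho a rho : 0 <= rho -> forall m n, 0 <= Rabs (a m n) * rho ^ m * rho ^ n.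
Proof. intros. apply Rmult_le_pos. apply Rmult_le_pos. apply Rabs_pos. apply pow_le; auto. apply pow_le; auto. Qed.

Lemma row_bound (c : nat -> nat -> R) M m N :
  (forall m n, 0 <= c m n) -> (forall N, SQ c N <= M) -> sum_n (fun n => c m n) N <= M.
Proof.
  intros Hp Hb. eapply Rle_trans. 2: apply (Hb (Nat.max m N)).
  eapply Rle_trans. 2: apply sq_mono; auto.
  apply (term_le (fun m => sum_n (fun n => c m n) N)). intro; apply sum_nonneg; auto. lia.
Qed.

Lemma bernoulli h m : 0 <= h -> 1 + INR m * h <= (1 + h) ^ m.
Proof.
  intro H. induction m. simpl; lra.
  rewrite S_INR. simpl. assert (0 <= INR m * h * h) by (apply Rmult_le_pos; auto; apply Rmult_le_pos; auto; apply pos_INR). nra.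
Qed.

Lemma pow_bound rho rho' : 0 <= rho < rho' -> exists C, 0 <= C /\ forall m, INR (S m) * rho ^ m <= C * rho' ^ (S m).
Proof.
  intros [H0 H1].
  destruct (Req_dec rho 0) as [E|E].
  - exists (/ rho'). split. left; apply Rinv_0_lt_compat; lra.
    intro m. subst. destruct m. simpl. field_simplify; lra.
    rewrite pow_i by lia. rewrite Rmult_0_r. apply Rmult_le_pos. left; apply Rinv_0_lt_compat; lra. apply pow_le; lra.
  - set (h := rho' / rho - 1).
    assert (Hh : 0 < h). { unfold h. replace (rho' / rho - 1) with ((rho' - rho) / rho) by (field; lra). apply Rdiv_lt_0_compat; lra. }
    exists ((1 + / h) / rho'). split. apply Rmult_le_pos. assert (0 < /h) by (apply Rinv_0_lt_compat; lra). lra. left; apply Rinv_0_lt_compat; lra.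
    intro m.
    assert (Er : rho' = rho * (1 + h)) by (unfold h; field; lra).
    assert (B := bernoulli h m (Rlt_le _ _ Hh)).
    rewrite <- tech_pow_Rmult.
    replace ((1 + / h) / rho' * (rho' * rho' ^ m)) with ((1 + /h) * rho' ^ m) by (field; split; lra).
    rewrite Er, Rpow_mult_distr.
    assert (Hp : 0 < rho ^ m) by (apply pow_lt; lra).
    rewrite (Rmult_comm (rho ^ m)), <- Rmult_assoc. apply Rmult_le_compat_r. lra.
    rewrite S_INR.
    assert (INR m + 1 <= (1 + / h) * (1 + INR m * h)).
    { assert (0 <= INR m) by apply pos_INR.
      replace ((1 + / h) * (1 + INR m * h)) with (1 + INR m * h + / h + INR m) by (field; lra).
      assert (0 < / h) by (apply Rinv_0_lt_compat; lra). nra. }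
    assert (0 < 1 + / h) by (assert (0 < / h) by (apply Rinv_0_lt_compat; lra); lra).
    apply Rle_trans with ((1 + / h) * (1 + INR m * h)); auto.
    apply Rmult_le_compat_l; lra.
Qed.

Lemma AN_dxa a r : AN a r -> AN (dxa a) r.
Proof.
  intros H rho Hr.
  set (rho' := (rho + r) / 2).
  assert (Hr' : 0 <= rho' < r) by (unfold rho'; lra).
  assert (Hrr : rho <= rho') by (unfold rho'; lra).
  destruct (H rho' Hr') as [M HM].
  destruct (pow_bound rho rho') as [C [HC0 HC]]. unfold rho'; lra.
  exists (C * M). intro N.
  set (g := fun m n => Rabs (a m n) * rho' ^ m * rho' ^ n).
  assert (Hg : forall m n, 0 <= g m n) by (intros; apply AB_nonneg_rho; lra).
  apply Rle_trans with (sum_n (fun m => sum_n (fun n => C * g (S m) n) N) N).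
  - apply sum_le; intro m; apply sum_le; intro n. unfold dxa, g.
    rewrite Rabs_mult, Rabs_pos_eq by apply pos_INR.
    specialize (HC m).
    assert (rho ^ n <= rho' ^ n) by (apply pow_incr; lra).
    assert (0 <= rho ^ n) by (apply pow_le; lra).
    assert (0 <= Rabs (a (S m) n)) by apply Rabs_pos.
    assert (0 <= rho' ^ n) by (apply pow_le; lra).
    assert (0 <= INR (S m) * rho ^ m) by (apply Rmult_le_pos; [apply pos_INR | apply pow_le; lra]).
    apply Rle_trans with ((INR (S m) * rho ^ m) * Rabs (a (S m) n) * rho ^ n). right; ring.
    apply Rle_trans with ((C * rho' ^ (S m)) * Rabs (a (S m) n) * rho' ^ n). 2: right; ring.
    apply Rmult_le_compat. apply Rmult_le_pos; auto. auto. apply Rmult_le_compat_r; auto. auto.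
  - rewrite (sum_ext _ (fun m => C * sum_n (fun n => g (S m) n) N)).
    2: intro; apply sum_scal.
    rewrite sum_scal. apply Rmult_le_compat_l; auto.
    apply Rle_trans with (sum_n (fun m => sum_n (fun n => g m n) N) (S N)).
    + rewrite sum_shift. assert (0 <= sum_n (fun n => g 0%nat n) N) by (apply sum_nonneg; auto). lra.
    + eapply Rle_trans. 2: apply (HM (S N)). unfold SQ. fold g.
      apply sum_le. intro m. apply sum_mono; auto. intro k; apply (Hg m k).
Qed.

Lemma AN_tra a r : AN a r -> AN (tra a) r.
Proof.
  intros H rho Hr. destruct (H rho Hr) as [M HM]. exists M. intro N.
  rewrite <- SQ_tr. eapply Rle_trans. 2: apply (HM N). right. unfold SQ, tra.
  apply sum_ext; intro; apply sum_ext; intro; ring.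
Qed.

Lemma AN_dya a r : AN a r -> AN (dya a) r.
Proof.
  intro H. assert (H2 := AN_tra _ _ (AN_dxa _ _ (AN_tra _ _ H))).
  intros rho Hr. destruct (H2 rho Hr) as [M HM]. exists M. intro N. eapply Rle_trans. 2: apply (HM N).
  right. reflexivity.
Qed.

Lemma ps_tra a r X Y : AN a r -> Rabs X < r -> Rabs Y < r -> ps a X Y = ps (tra a) Y X.
Proof.
  intros H HX HY.
  set (rho := Rmax (Rabs X) (Rabs Y)).
  assert (Hr : 0 <= rho < r) by (unfold rho; split; [apply Rle_trans with (Rabs X); [apply Rabs_pos|apply Rmax_l] | apply Rmax_lub_lt; auto]).
  destruct (H rho Hr) as [M HM].
  unfold ps. rewrite (DS_tr _ M).
  - apply DS_ext. intros; unfold tra; ring.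
  - apply ps_terms_bound with rho; auto. apply Rmax_l. apply Rmax_r.
Qed.

Lemma ps_dx a r X Y : AN a r -> Rabs X < r -> Rabs Y < r ->
  is_derive (fun t => ps a t Y) X (ps (dxa a) X Y).
Proof.
  intros H HX HY.
  set (rho := (Rmax (Rabs X) (Rabs Y) + r) / 2).
  assert (Hmx : Rmax (Rabs X) (Rabs Y) < r) by (apply Rmax_lub_lt; auto).
  assert (HXr : Rabs X < rho) by (unfold rho; pose proof (Rmax_l (Rabs X) (Rabs Y)); lra).
  assert (HYr : Rabs Y < rho) by (unfold rho; pose proof (Rmax_r (Rabs X) (Rabs Y)); lra).
  assert (Hr : 0 <= rho < r) by (pose proof (Rabs_pos X); unfold rho in *; lra).
  destruct (H rho Hr) as [M HM].
  set (b := fun m => Series (fun n => a m n * Y ^ n)).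
  assert (Hfun : forall t, PSeries b t = ps a t Y).
  { intro t. unfold PSeries, ps, DS, b. apply Series_ext. intro m.
    rewrite <- Series_scal_r. apply Series_ext. intro n. ring. }
  assert (Hpos : forall m n, 0 <= Rabs (a m n) * rho ^ m * rho ^ n) by (intros; apply AB_nonneg_rho; lra).
  assert (Hbm : forall m, Rabs (b m * rho ^ m) <= M).
  { intro m.
    assert (Hrow : forall N, sum_n (fun n => Rabs (a m n) * rho ^ m * rho ^ n) N <= M).
    { intro N. apply (row_bound (fun m n => Rabs (a m n) * rho ^ m * rho ^ n)); auto. }
    assert (Hex : ex_series (fun n => a m n * Y ^ n)).
    { apply ex_series_Rabs.
      assert (Hp' : forall n, 0 <= Rabs (a m n * Y ^ n)) by (intro; apply Rabs_pos).
      destruct (Req_dec rho 0) as [E|E]. pose proof (Rabs_pos Y); lra.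
      apply (ex_series_pos_bnd _ (M / rho ^ m)); auto.
      intro N. assert (Hrm : 0 < rho ^ m) by (apply pow_lt; lra).
      apply Rmult_le_reg_r with (rho ^ m); auto. unfold Rdiv. rewrite Rmult_assoc, Rinv_l, Rmult_1_r by lra.
      eapply Rle_trans. 2: apply (Hrow N). rewrite Rmult_comm, <- sum_scal. apply sum_le. intro n.
      rewrite Rabs_mult. pose proof (pow_abs_le Y rho n ltac:(lra)). pose proof (Rabs_pos (a m n)).
      apply Rle_trans with (rho ^ m * (Rabs (a m n) * rho ^ n)). 2: right; ring.
      apply Rmult_le_compat_l. lra. apply Rmult_le_compat_l; lra. }
    pose proof (series_lim _ Hex) as HL.
    assert (HL2 : is_lim_seq (fun N => Rabs (sum_n (fun n => a m n * Y ^ n) N * rho ^ m)) (Rabs (b m * rho ^ m))).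
    { apply (is_lim_seq_abs _ (Finite (b m * rho ^ m))). apply is_lim_seq_mult'; auto. apply is_lim_seq_const. }
    assert (Rbar_le (Rabs (b m * rho ^ m)) M).
    { apply is_lim_seq_le with (2 := HL2) (3 := is_lim_seq_const M). intro N.
      eapply Rle_trans. 2: apply (Hrow N). rewrite Rabs_mult, (Rabs_pos_eq (rho ^ m)) by (apply pow_le; lra).
      eapply Rle_trans. apply Rmult_le_compat_r. apply pow_le; lra. apply sum_abs.
      rewrite Rmult_comm, <- sum_scal. apply sum_le. intro n.
      rewrite Rabs_mult. pose proof (pow_abs_le Y rho n ltac:(lra)). pose proof (Rabs_pos (a m n)).
      assert (0 <= rho ^ m) by (apply pow_le; lra).
      apply Rle_trans with (rho ^ m * (Rabs (a m n) * rho ^ n)). 2: right; ring.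
      apply Rmult_le_compat_l. lra. apply Rmult_le_compat_l; lra. }
    exact H0. }
  assert (HCV : Rbar_lt (Rabs X) (CV_radius b)).
  { apply Rbar_lt_le_trans with (Finite rho). exact HXr.
    destruct (CV_radius_bounded b) as [Hub _]. apply Hub. exists M. exact Hbm. }
  pose proof (is_derive_PSeries b X HCV) as HD.
  apply is_derive_ext with (PSeries b). exact Hfun.
  replace (ps (dxa a) X Y) with (PSeries (PS_derive b) X). exact HD.
  unfold PSeries, PS_derive, ps, DS, b, dxa. apply Series_ext. intro m.
  rewrite <- Series_scal_l, <- Series_scal_r. apply Series_ext. intro n. ring.
Qed.

Lemma ps_dy a r X Y : AN a r -> Rabs X < r -> Rabs Y < r ->
  is_derive (fun t => ps a X t) Y (ps (dya a) X Y).
Proof.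
  intros H HX HY.
  assert (Ht := AN_tra _ _ H).
  apply is_derive_ext_loc with (fun t => ps (tra a) t X).
  { exists (mkposreal (r - Rabs Y) ltac:(lra)). intros t Ht'.
    symmetry. apply ps_tra with r; auto. unfold ball in Ht'; simpl in Ht'. unfold AbsRing_ball, abs, minus, plus, opp in Ht'; simpl in Ht'.
    pose proof (Rabs_triang_inv t Y). unfold Rminus in H0. lra. }
  replace (ps (dya a) X Y) with (ps (dxa (tra a)) Y X).
  apply ps_dx with r; auto.
  rewrite (ps_tra (dya a) r X Y); auto. all: try (apply AN_dya; auto).
Qed.

Lemma ps_cont a r X Y : AN a r -> Rabs X < r -> Rabs Y < r ->
  forall eps, 0 < eps -> exists del, 0 < del /\ forall X' Y', Rabs (X' - X) < del -> Rabs (Y' - Y) < del ->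
    Rabs (ps a X' Y' - ps a X Y) < eps.
Proof.
  intros H HX HY eps He.
  set (m0 := Rmax (Rabs X) (Rabs Y)).
  assert (Hm0 : m0 < r) by (apply Rmax_lub_lt; auto).
  set (rho := (m0 + r) / 2).
  assert (Hr : 0 <= rho < r) by (pose proof (Rabs_pos X); pose proof (Rmax_l (Rabs X) (Rabs Y)); unfold rho, m0 in *; lra).
  destruct (AN_dxa _ _ H rho Hr) as [Mx HMx].
  destruct (AN_dya _ _ H rho Hr) as [My HMy].
  assert (HMx0 : 0 <= Mx).
  { eapply Rle_trans. 2: apply (HMx 0%nat). unfold SQ. apply sum_nonneg; intro; apply sum_nonneg; intro. apply AB_nonneg_rho; lra. }
  assert (HMy0 : 0 <= My).
  { eapply Rle_trans. 2: apply (HMy 0%nat). unfold SQ. apply sum_nonneg; intro; apply sum_nonneg; intro. apply AB_nonneg_rho; lra. }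
  set (del := Rmin (rho - m0) (eps / (Mx + My + 1))).
  assert (Hd : 0 < del).
  { unfold del. apply Rmin_pos. unfold rho; lra. apply Rdiv_lt_0_compat; lra. }
  exists del. split; auto. intros X' Y' H1 H2.
  assert (Hdr : del <= rho - m0) by apply Rmin_l.
  assert (Hde : del <= eps / (Mx + My + 1)) by apply Rmin_r.
  assert (HXm := Rmax_l (Rabs X) (Rabs Y)). assert (HYm := Rmax_r (Rabs X) (Rabs Y)). fold m0 in HXm, HYm.
  assert (HX' : Rabs X' < rho) by (pose proof (Rabs_triang_inv X' X); lra).
  assert (HY' : Rabs Y' < rho) by (pose proof (Rabs_triang_inv Y' Y); lra).
  assert (Hbox : forall s, Rmin X X' <= s <= Rmax X X' -> Rabs s < rho).
  { intros s Hs.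
    assert (A1 := proj1 (Rabs_lt_between X rho) ltac:(unfold rho in *; lra)).
    assert (A2 := proj1 (Rabs_lt_between X' rho) HX').
    apply Rabs_lt_between. unfold Rmin, Rmax in Hs. destruct (Rle_dec X X'); lra. }
  assert (Hboy : forall s, Rmin Y Y' <= s <= Rmax Y Y' -> Rabs s < rho).
  { intros s Hs.
    assert (A1 := proj1 (Rabs_lt_between Y rho) ltac:(unfold rho in *; lra)).
    assert (A2 := proj1 (Rabs_lt_between Y' rho) HY').
    apply Rabs_lt_between. unfold Rmin, Rmax in Hs. destruct (Rle_dec Y Y'); lra. }
  destruct (mvt (fun t => ps a t Y') (fun t => ps (dxa a) t Y') X X') as [c1 [Hc1 E1]].
  { intros t Ht. apply ps_dx with r; auto. specialize (Hbox t Ht); lra. lra. }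
  destruct (mvt (fun t => ps a X t) (fun t => ps (dya a) X t) Y Y') as [c2 [Hc2 E2]].
  { intros t Ht. apply ps_dy with r; auto. specialize (Hboy t Ht); lra. }
  assert (B1 : Rabs (ps (dxa a) c1 Y') <= Mx).
  { apply ps_bound with rho; auto. specialize (Hbox c1 Hc1); lra. lra. }
  assert (B2 : Rabs (ps (dya a) X c2) <= My).
  { apply ps_bound with rho; auto. lra. specialize (Hboy c2 Hc2); lra. }
  replace (ps a X' Y' - ps a X Y) with ((ps a X' Y' - ps a X Y') + (ps a X Y' - ps a X Y)) by ring.
  rewrite E1, E2.
  eapply Rle_lt_trans. apply Rabs_triang. rewrite !Rabs_mult.
  assert (Hq : eps / (Mx + My + 1) * (Mx + My + 1) = eps) by (field; lra).
  assert (Rabs (ps (dxa a) c1 Y') * Rabs (X' - X) <= Mx * del).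
  { apply Rmult_le_compat; auto; try apply Rabs_pos; lra. }
  assert (Rabs (ps (dya a) X c2) * Rabs (Y' - Y) <= My * del).
  { apply Rmult_le_compat; auto; try apply Rabs_pos; lra. }
  assert ((Mx + My) * del < eps).
  { apply Rle_lt_trans with ((Mx + My) * (eps / (Mx + My + 1))). apply Rmult_le_compat_l; lra.
    assert (0 < eps / (Mx + My + 1)) by (apply Rdiv_lt_0_compat; lra). nra. }
  lra.
Qed.

Lemma D_plus (f g : R -> R) x a b : is_derive f x a -> is_derive g x b -> is_derive (fun t => f t + g t) x (a + b).
Proof. intros H1 H2. apply (is_derive_plus (K:=R_AbsRing) (V:=R_NormedModule) f g x a b H1 H2). Qed.
Lemma D_mult (f g : R -> R) x a b : is_derive f x a -> is_derive g x b -> is_derive (fun t => f t * g t) x (a * g x + f x * b).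
Proof. intros H1 H2. apply (is_derive_mult (K:=R_AbsRing) f g x a b H1 H2). intros; apply Rmult_comm. Qed.
Lemma D_const (c x : R) : is_derive (fun _ => c) x 0.
Proof. apply (is_derive_const (K:=R_AbsRing) (V:=R_NormedModule)). Qed.
Lemma D_id (x : R) : is_derive (fun t => t) x 1.
Proof. apply (is_derive_id (K:=R_AbsRing)). Qed.
Lemma D_ext (f g : R -> R) x l : (forall t, f t = g t) -> is_derive f x l -> is_derive g x l.
Proof. intros H1 H2. apply (is_derive_ext (K:=R_AbsRing) (V:=R_NormedModule) f g x l H1 H2). Qed.
Lemma D_shift (g : R -> R) c y L : is_derive g (y - c) L -> is_derive (fun t => g (t - c)) y L.
Proof.
  intro H. assert (H2 : is_derive (fun t => t - c) y 1).
  { replace 1 with (1 + 0) by ring. apply D_ext with (fun t => t + - c). intro; ring.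
    apply D_plus. apply D_id. apply D_const. }
  pose proof (is_derive_comp (K:=R_AbsRing) (V:=R_NormedModule) g (fun t => t - c) y L 1 H H2) as H3.
  simpl in H3. replace L with (scal 1 L). exact H3. apply (scal_one (K:=R_AbsRing) (V:=R_NormedModule)).
Qed.
Lemma D_ext_loc (f g : R -> R) x l e : 0 < e -> (forall t : R, Rabs (t - x) < e -> f t = g t) -> is_derive f x l -> is_derive g x l.
Proof.
  intros He H1 H2. apply (is_derive_ext_loc (K:=R_AbsRing) (V:=R_NormedModule) f g x l); auto.
  exists (mkposreal e He). intros t Ht. apply H1. exact Ht.
Qed.
Lemma D_unique (f : R -> R) x l : is_derive f x l -> Derive f x = l.
Proof. apply is_derive_unique. Qed.

Definition J (I : R * R -> R) (i j : nat) : R * R -> R := Nat.iter i partial_x (Nat.iter j partial_y I).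
Definition Dij (a : nat -> nat -> R) (i j : nat) := Nat.iter i dxa (Nat.iter j dya a).

Definition inbox (p0 : R * R) (r : R) (q : R * R) := Rabs (fst q - fst p0) < r /\ Rabs (snd q - snd p0) < r.

Lemma AN_Dij a r i j : AN a r -> AN (Dij a i j) r.
Proof.
  intro H. unfold Dij. induction i; simpl.
  - induction j; simpl; auto. apply AN_dya; auto.
  - apply AN_dxa; auto.
Qed.

Lemma local_rep I : real_analytic2 I -> forall p0, exists r a, 0 < r /\ AN a r /\
  forall q, inbox p0 r q -> I q = ps a (fst q - fst p0) (snd q - snd p0).
Proof.
  intros HI p0. destruct (HI p0) as [r [Hr [a Ha]]].
  exists r, a. split; auto. split.
  - intros rho Hrho.
    destruct (Ha (fst p0 + rho, snd p0 + rho)) as [[M HM] _]; simpl.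
    1,2: replace (fst p0 + rho - fst p0) with rho by ring || replace (snd p0 + rho - snd p0) with rho by ring;
      rewrite Rabs_pos_eq; lra.
    exists M. intro N. eapply Rle_trans. 2: apply (HM N). right. unfold SQ.
    apply sum_ext; intro m; apply sum_ext; intro n. simpl.
    replace (fst p0 + rho - fst p0) with rho by ring. replace (snd p0 + rho - snd p0) with rho by ring.
    rewrite (Rabs_pos_eq rho) by lra. reflexivity.
  - intros q [H1 H2]. destruct (Ha q H1 H2) as [[M HM] HL].
    set (c := fun m n => a m n * (fst q - fst p0) ^ m * (snd q - snd p0) ^ n).
    assert (Hb : forall N, SQ (absc c) N <= M).
    { intro N. eapply Rle_trans. 2: apply (HM N). right. unfold SQ, absc, c.
      apply sum_ext; intro m; apply sum_ext; intro n. rewrite !Rabs_mult, <- !RPow_abs. reflexivity. }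
    destruct (dseries c M Hb) as [_ [HL2 _]].
    apply is_lim_seq_unique in HL. apply is_lim_seq_unique in HL2.
    unfold SQ, c in HL2. rewrite HL in HL2. injection HL2; auto.
Qed.

Lemma ps_ext a b X Y : (forall m n, a m n = b m n) -> ps a X Y = ps b X Y.
Proof. intro H. unfold ps. apply DS_ext. intros. rewrite H. reflexivity. Qed.

Lemma inbox_open p0 r q : inbox p0 r q -> exists e, 0 < e /\ forall q', Rabs (fst q' - fst q) < e -> Rabs (snd q' - snd q) < e -> inbox p0 r q'.
Proof.
  intros [H1 H2]. exists (Rmin (r - Rabs (fst q - fst p0)) (r - Rabs (snd q - snd p0))).
  split. apply Rmin_pos; lra.
  intros q' H3 H4. pose proof (Rmin_l (r - Rabs (fst q - fst p0)) (r - Rabs (snd q - snd p0))).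
  pose proof (Rmin_r (r - Rabs (fst q - fst p0)) (r - Rabs (snd q - snd p0))).
  split.
  - replace (fst q' - fst p0) with ((fst q' - fst q) + (fst q - fst p0)) by ring.
    eapply Rle_lt_trans. apply Rabs_triang. lra.
  - replace (snd q' - snd p0) with ((snd q' - snd q) + (snd q - snd p0)) by ring.
    eapply Rle_lt_trans. apply Rabs_triang. lra.
Qed.

Lemma J_rep I p0 r a : 0 < r -> AN a r -> (forall q, inbox p0 r q -> I q = ps a (fst q - fst p0) (snd q - snd p0)) ->
  forall i j q, inbox p0 r q -> J I i j q = ps (Dij a i j) (fst q - fst p0) (snd q - snd p0).
Proof.
  intros Hr Ha HI.
  assert (Hj : forall j q, inbox p0 r q -> J I 0 j q = ps (Dij a 0 j) (fst q - fst p0) (snd q - snd p0)).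
  { induction j; intros q Hq. change (I q = ps a (fst q - fst p0) (snd q - snd p0)). apply HI; exact Hq.
    change (Derive (fun t => J I 0 j (fst q, t)) (snd q) = ps (dya (Dij a 0 j)) (fst q - fst p0) (snd q - snd p0)).
    apply D_unique.
    destruct (inbox_open _ _ _ Hq) as [e [He He']].
    apply (D_ext_loc (fun t => ps (Dij a 0 j) (fst q - fst p0) (t - snd p0))) with e. exact He.
    { intros t Ht.
      assert (Hin : inbox p0 r (fst q, t)). { apply He'. change (Rabs (fst q - fst q) < e). rewrite Rminus_diag, Rabs_R0; lra. exact Ht. }
      pose proof (IHj (fst q, t) Hin) as E. cbn [fst snd] in E. rewrite E. reflexivity. }
    apply (D_shift (fun s => ps (Dij a 0 j) (fst q - fst p0) s) (snd p0)).
    exact (ps_dy (Dij a 0 j) r (fst q - fst p0) (snd q - snd p0) (AN_Dij a r 0 j Ha) (proj1 Hq) (proj2 Hq)). }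
  induction i; intros j q Hq. apply Hj; exact Hq.
  change (Derive (fun t => J I i j (t, snd q)) (fst q) = ps (dxa (Dij a i j)) (fst q - fst p0) (snd q - snd p0)).
  apply D_unique.
  destruct (inbox_open _ _ _ Hq) as [e [He He']].
  apply (D_ext_loc (fun t => ps (Dij a i j) (t - fst p0) (snd q - snd p0))) with e. exact He.
  { intros t Ht.
    assert (Hin : inbox p0 r (t, snd q)). { apply He'. exact Ht. change (Rabs (snd q - snd q) < e). rewrite Rminus_diag, Rabs_R0; lra. }
    pose proof (IHi j (t, snd q) Hin) as E. cbn [fst snd] in E. rewrite E. reflexivity. }
  apply (D_shift (fun s => ps (Dij a i j) s (snd q - snd p0)) (fst p0)).
  exact (ps_dx (Dij a i j) r (fst q - fst p0) (snd q - snd p0) (AN_Dij a r i j Ha) (proj1 Hq) (proj2 Hq)).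
Qed.

Lemma dxa_ext a b : (forall m n, a m n = b m n) -> forall m n, dxa a m n = dxa b m n.
Proof. intros H m n. unfold dxa. rewrite H. auto. Qed.
Lemma dya_ext a b : (forall m n, a m n = b m n) -> forall m n, dya a m n = dya b m n.
Proof. intros H m n. unfold dya. rewrite H. auto. Qed.

Lemma dya_Dij a i j : forall m n, dya (Dij a i j) m n = Dij a i (S j) m n.
Proof.
  unfold Dij. induction i; intros m n. simpl. reflexivity.
  simpl. rewrite <- (dxa_ext _ _ IHi). unfold dxa, dya. ring.
Qed.

Definition cont2 (F : R * R -> R) (p : R * R) :=
  forall eps, 0 < eps -> exists del, 0 < del /\ forall q, Rabs (fst q - fst p) < del -> Rabs (snd q - snd p) < del ->
    Rabs (F q - F p) < eps.

Section Jets.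
Variable I : R * R -> R.
Hypothesis HI : real_analytic2 I.

Lemma J_dx i j p : is_derive (fun t : R => J I i j (t, snd p)) (fst p) (J I (S i) j p).
Proof.
  destruct (local_rep I HI p) as [r [a [Hr [Ha Hrep]]]].
  assert (Hp : inbox p r p) by (split; rewrite Rminus_diag, Rabs_R0; lra).
  rewrite (J_rep I p r a Hr Ha Hrep (S i) j p Hp).
  destruct (inbox_open _ _ _ Hp) as [e [He He']].
  apply (D_ext_loc (fun t => ps (Dij a i j) (t - fst p) (snd p - snd p))) with e. exact He.
  { intros t Ht.
    assert (Hin : inbox p r (t, snd p)). { apply He'. exact Ht. change (Rabs (snd p - snd p) < e). rewrite Rminus_diag, Rabs_R0; lra. }
    pose proof (J_rep I p r a Hr Ha Hrep i j (t, snd p) Hin) as E. cbn [fst snd] in E. rewrite E. reflexivity. }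
  apply (D_shift (fun s => ps (Dij a i j) s (snd p - snd p)) (fst p)).
  exact (ps_dx (Dij a i j) r (fst p - fst p) (snd p - snd p) (AN_Dij a r i j Ha) (proj1 Hp) (proj2 Hp)).
Qed.

Lemma J_dy i j p : is_derive (fun t : R => J I i j (fst p, t)) (snd p) (J I i (S j) p).
Proof.
  destruct (local_rep I HI p) as [r [a [Hr [Ha Hrep]]]].
  assert (Hp : inbox p r p) by (split; rewrite Rminus_diag, Rabs_R0; lra).
  rewrite (J_rep I p r a Hr Ha Hrep i (S j) p Hp).
  rewrite <- (ps_ext _ _ _ _ (dya_Dij a i j)).
  destruct (inbox_open _ _ _ Hp) as [e [He He']].
  apply (D_ext_loc (fun t => ps (Dij a i j) (fst p - fst p) (t - snd p))) with e. exact He.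
  { intros t Ht.
    assert (Hin : inbox p r (fst p, t)). { apply He'. change (Rabs (fst p - fst p) < e). rewrite Rminus_diag, Rabs_R0; lra. exact Ht. }
    pose proof (J_rep I p r a Hr Ha Hrep i j (fst p, t) Hin) as E. cbn [fst snd] in E. rewrite E. reflexivity. }
  apply (D_shift (fun s => ps (Dij a i j) (fst p - fst p) s) (snd p)).
  exact (ps_dy (Dij a i j) r (fst p - fst p) (snd p - snd p) (AN_Dij a r i j Ha) (proj1 Hp) (proj2 Hp)).
Qed.

Lemma J_cont i j p : cont2 (J I i j) p.
Proof.
  destruct (local_rep I HI p) as [r [a [Hr [Ha Hrep]]]].
  assert (Hp : inbox p r p) by (split; rewrite Rminus_diag, Rabs_R0; lra).
  intros eps He.
  destruct (ps_cont (Dij a i j) r (fst p - fst p) (snd p - snd p) (AN_Dij a r i j Ha) (proj1 Hp) (proj2 Hp) eps He) as [d [Hd Hc]].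
  destruct (inbox_open _ _ _ Hp) as [e [He0 He']].
  exists (Rmin d e). split. apply Rmin_pos; auto.
  intros q H1 H2.
  pose proof (Rmin_l d e). pose proof (Rmin_r d e).
  rewrite (J_rep I p r a Hr Ha Hrep i j q) by (apply He'; lra).
  rewrite (J_rep I p r a Hr Ha Hrep i j p Hp).
  apply Hc. rewrite Rminus_diag, Rminus_0_r. lra. rewrite Rminus_diag, Rminus_0_r. lra.
Qed.

End Jets.

Inductive ex :=
| EJ (i j : nat) | EX | EMu | EC (c : R) | EAdd (a b : ex) | EMul (a b : ex).

Definition mu (p : R * R) := exp (fst p ^ 2 - snd p).

Fixpoint ev (I : R * R -> R) (e : ex) (p : R * R) : R :=
  match e with
  | EJ i j => J I i j p
  | EX => fst p
  | EMu => mu p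
  | EC c => c
  | EAdd a b => ev I a p + ev I b p
  | EMul a b => ev I a p * ev I b p
  end.

Fixpoint dX (e : ex) : ex :=
  match e with
  | EJ i j => EJ (S i) j
  | EX => EC 1
  | EMu => EMul (EMul (EC 2) EX) EMu
  | EC _ => EC 0
  | EAdd a b => EAdd (dX a) (dX b)
  | EMul a b => EAdd (EMul (dX a) b) (EMul a (dX b))
  end.

Fixpoint dY (e : ex) : ex :=
  match e with
  | EJ i j => EJ i (S j)
  | EX => EC 0
  | EMu => EMul (EC (-1)) EMu
  | EC _ => EC 0
  | EAdd a b => EAdd (dY a) (dY b)
  | EMul a b => EAdd (EMul (dY a) b) (EMul a (dY b))
  end.

Lemma prod_close A A0 B B0 e : Rabs (A - A0) < e -> Rabs (B - B0) < e -> e <= 1 ->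
  Rabs (A * B - A0 * B0) <= e * (Rabs A0 + Rabs B0 + 1).
Proof.
  intros H1 H2 H3.
  replace (A * B - A0 * B0) with ((A - A0) * B + A0 * (B - B0)) by ring.
  eapply Rle_trans. apply Rabs_triang. rewrite !Rabs_mult.
  assert (Rabs B <= Rabs B0 + e).
  { replace B with ((B - B0) + B0) by ring. eapply Rle_trans. apply Rabs_triang. lra. }
  pose proof (Rabs_pos (A - A0)). pose proof (Rabs_pos A0). pose proof (Rabs_pos B). pose proof (Rabs_pos (B - B0)).
  assert (Rabs (A - A0) * Rabs B <= e * (Rabs B0 + 1)).
  { apply Rle_trans with (e * (Rabs B0 + e)). apply Rmult_le_compat; lra. nra. }
  assert (Rabs A0 * Rabs (B - B0) <= Rabs A0 * e) by (apply Rmult_le_compat_l; lra).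
  nra.
Qed.

Lemma cont2_plus F G p : cont2 F p -> cont2 G p -> cont2 (fun q => F q + G q) p.
Proof.
  intros HF HG eps He.
  destruct (HF (eps/2) ltac:(lra)) as [d1 [Hd1 H1]].
  destruct (HG (eps/2) ltac:(lra)) as [d2 [Hd2 H2]].
  exists (Rmin d1 d2). split. apply Rmin_pos; auto.
  intros q Q1 Q2. pose proof (Rmin_l d1 d2). pose proof (Rmin_r d1 d2).
  specialize (H1 q ltac:(lra) ltac:(lra)). specialize (H2 q ltac:(lra) ltac:(lra)).
  replace (F q + G q - (F p + G p)) with ((F q - F p) + (G q - G p)) by ring.
  eapply Rle_lt_trans. apply Rabs_triang. lra.
Qed.

Lemma cont2_mult F G p : cont2 F p -> cont2 G p -> cont2 (fun q => F q * G q) p.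
Proof.
  intros HF HG eps He.
  set (K := Rabs (F p) + Rabs (G p) + 1).
  assert (HK : 0 < K) by (unfold K; pose proof (Rabs_pos (F p)); pose proof (Rabs_pos (G p)); lra).
  set (e := Rmin 1 (eps / (2 * K))).
  assert (He0 : 0 < e) by (unfold e; apply Rmin_pos; [lra | apply Rdiv_lt_0_compat; lra]).
  destruct (HF e He0) as [d1 [Hd1 H1]].
  destruct (HG e He0) as [d2 [Hd2 H2]].
  exists (Rmin d1 d2). split. apply Rmin_pos; auto.
  intros q Q1 Q2. pose proof (Rmin_l d1 d2). pose proof (Rmin_r d1 d2).
  specialize (H1 q ltac:(lra) ltac:(lra)). specialize (H2 q ltac:(lra) ltac:(lra)).
  eapply Rle_lt_trans. apply (prod_close _ _ _ _ e H1 H2). apply Rmin_l.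
  fold K. assert (e <= eps / (2 * K)) by apply Rmin_r.
  apply Rle_lt_trans with (eps / (2 * K) * K). apply Rmult_le_compat_r; lra.
  replace (eps / (2 * K) * K) with (eps / 2) by (field; lra). lra.
Qed.

Lemma cont2_ext F G p : (forall q, F q = G q) -> cont2 F p -> cont2 G p.
Proof. intros E H eps He. destruct (H eps He) as [d [Hd H1]]. exists d. split; auto. intros. rewrite <- !E. auto. Qed.

Lemma cont2_const c p : cont2 (fun _ => c) p.
Proof. intros eps He. exists 1. split. lra. intros. rewrite Rminus_diag, Rabs_R0. lra. Qed.

Lemma cont2_fst p : cont2 fst p.
Proof. intros eps He. exists eps. split. lra. intros. auto. Qed.
Lemma cont2_snd p : cont2 snd p.
Proof. intros eps He. exists eps. split. lra. intros. auto. Qed.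

Lemma cont2_exp F p : cont2 F p -> cont2 (fun q => exp (F q)) p.
Proof.
  intros HF eps He.
  pose proof (derivable_continuous_pt exp (F p) (derivable_pt_exp (F p))) as Hc.
  destruct (Hc eps He) as [a [Ha Hc2]].
  destruct (HF a Ha) as [d [Hd H1]].
  exists d. split; auto. intros q Q1 Q2.
  destruct (Req_dec (F q) (F p)) as [E|E].
  - rewrite E, Rminus_diag, Rabs_R0; lra.
  - apply (Hc2 (F q)). split. split. exact I. auto. apply H1; auto.
Qed.

Lemma cont2_mu p : cont2 mu p.
Proof.
  unfold mu. apply cont2_exp.
  apply (cont2_plus (fun q => fst q ^ 2) (fun q => - snd q)).
  - apply (cont2_mult fst (fun q => fst q ^ 1)). apply cont2_fst.
    apply (cont2_mult fst (fun q => 1)). apply cont2_fst. apply cont2_const.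
  - apply (cont2_ext (fun q => -1 * snd q)). intro; ring.
    apply (cont2_mult (fun _ => -1) snd). apply cont2_const. apply cont2_snd.
Qed.

Section Ev.
Variable I : R * R -> R.
Hypothesis HI : real_analytic2 I.

Lemma ev_cont e p : cont2 (ev I e) p.
Proof.
  induction e; simpl.
  - apply J_cont; auto.
  - apply cont2_fst.
  - apply cont2_mu.
  - apply cont2_const.
  - apply cont2_plus; auto.
  - apply cont2_mult; auto.
Qed.

Lemma ev_dX0 e x y : is_derive (fun t : R => ev I e (t, y)) x (ev I (dX e) (x, y)).
Proof.
  induction e; simpl.
  - apply (J_dx I HI i j (x, y)).
  - apply D_id.
  - unfold mu; simpl. auto_derive; [constructor|]. unfold Rminus. ring.
  - apply D_const.
  - apply D_plus; auto.
  - apply D_mult; auto.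
Qed.

Lemma ev_dY0 e x y : is_derive (fun t : R => ev I e (x, t)) y (ev I (dY e) (x, y)).
Proof.
  induction e; simpl.
  - apply (J_dy I HI i j (x, y)).
  - apply D_const.
  - unfold mu; simpl. auto_derive; [constructor|]. unfold Rminus. ring.
  - apply D_const.
  - apply D_plus; auto.
  - apply D_mult; auto.
Qed.

Lemma ev_dX e p : is_derive (fun t : R => ev I e (t, snd p)) (fst p) (ev I (dX e) p).
Proof. destruct p as [x y]. apply ev_dX0. Qed.
Lemma ev_dY e p : is_derive (fun t : R => ev I e (fst p, t)) (snd p) (ev I (dY e) p).
Proof. destruct p as [x y]. apply ev_dY0. Qed.

Definition fE := EMul EMu (EAdd (EMul (EJ 1 0) (EJ 1 0)) (EMul (EJ 0 1) (EJ 0 1))).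
Definition gE := EMul EMu (EAdd (EJ 2 0) (EJ 0 2)).

Lemma conf_mu p : conf_factor p * mu p = 1.
Proof.
  unfold conf_factor, mu. rewrite <- exp_plus. replace (snd p - fst p ^ 2 + (fst p ^ 2 - snd p)) with 0 by ring.
  apply exp_0.
Qed.

Lemma grad_ev p : grad_norm2 conf_factor zero_fun conf_factor I p = ev I fE p.
Proof.
  unfold grad_norm2, metric_det, zero_fun. simpl.
  pose proof (conf_mu p). pose proof (exp_pos (snd p - fst p ^ 2)). fold (conf_factor p) in H0.
  unfold J. simpl.
  field_simplify_eq. 2: lra.
  replace (mu p) with (/ conf_factor p) by (field_simplify_eq; lra).
  field. lra.
Qed.

Lemma px_ext (F G : R * R -> R) p : (forall q, F q = G q) -> partial_x F p = partial_x G p.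
Proof. intro H. unfold partial_x. apply Derive_ext. intro; apply H. Qed.
Lemma py_ext (F G : R * R -> R) p : (forall q, F q = G q) -> partial_y F p = partial_y G p.
Proof. intro H. unfold partial_y. apply Derive_ext. intro; apply H. Qed.

Lemma lap_ev p : laplace_beltrami conf_factor zero_fun conf_factor I p = ev I gE p.
Proof.
  unfold laplace_beltrami, metric_det, zero_fun.
  assert (Hc : forall q, 0 < conf_factor q) by (intro; apply exp_pos).
  assert (Hs : forall q, sqrt (conf_factor q * conf_factor q - 0 ^ 2) = conf_factor q).
  { intro q. replace (conf_factor q * conf_factor q - 0 ^ 2) with (conf_factor q * conf_factor q) by ring.
    apply sqrt_square. left; apply Hc. }
  assert (E1 : forall q, sqrt (conf_factor q * conf_factor q - 0 ^ 2) *
        ((conf_factor q * partial_x I q - 0 * partial_y I q) / (conf_factor q * conf_factor q - 0 ^ 2)) = partial_x I q).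
  { intro q. rewrite Hs. specialize (Hc q). field. lra. }
  assert (E2 : forall q, sqrt (conf_factor q * conf_factor q - 0 ^ 2) *
        ((- 0 * partial_x I q + conf_factor q * partial_y I q) / (conf_factor q * conf_factor q - 0 ^ 2)) = partial_y I q).
  { intro q. rewrite Hs. specialize (Hc q). field. lra. }
  rewrite (px_ext _ (partial_x I) p E1), (py_ext _ (partial_y I) p E2).
  rewrite Hs. simpl.
  pose proof (conf_mu p). specialize (Hc p).
  replace (mu p) with (/ conf_factor p) by (field_simplify_eq; lra).
  unfold J. simpl. reflexivity.
Qed.

End Ev.

Lemma open_box (U : R * R -> Prop) z : open U -> U z ->
  exists e, 0 < e /\ forall w, Rabs (fst w - fst z) < e -> Rabs (snd w - snd z) < e -> U w.
Proof.
  intros HU Hz. destruct (HU z Hz) as [e He].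
  exists e. split. apply cond_pos. intros w H1 H2. apply He. split; auto.
Qed.

Definition cont1 (g : R -> R * R) (s : R) :=
  forall eps, 0 < eps -> exists del, 0 < del /\ forall s', Rabs (s' - s) < del ->
    Rabs (fst (g s') - fst (g s)) < eps /\ Rabs (snd (g s') - snd (g s)) < eps.

Lemma cont1_open (g : R -> R * R) (U : R * R -> Prop) s : open U -> U (g s) -> cont1 g s ->
  exists del, 0 < del /\ forall s', Rabs (s' - s) < del -> U (g s').
Proof.
  intros HU Hs Hc. destruct (open_box U _ HU Hs) as [e [He H]].
  destruct (Hc e He) as [d [Hd H2]]. exists d. split; auto. intros s' Hs'.
  destruct (H2 s' Hs'). apply H; auto.
Qed.

Section PathConn.
Variable g : R -> R * R.
Variables a b : R.
Hypothesis Hg : forall s, a <= s <= b -> cont1 g s.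
Let A := fun z => exists s, a <= s <= b /\ z = g s.

Lemma path_core (U V : R * R -> Prop) s1 s2 :
  open U -> open V -> (forall z, A z -> U z \/ V z) -> (forall z, ~ (A z /\ U z /\ V z)) ->
  a <= s1 -> s1 < s2 -> s2 <= b -> U (g s1) -> V (g s2) -> False.
Proof.
  intros HU HV Hcov Hdis H1 H12 H2 HU1 HV2.
  assert (HA : forall s, a <= s <= b -> A (g s)) by (intros s Hs; exists s; split; auto).
  set (E := fun s => s1 <= s <= s2 /\ forall s', s1 <= s' <= s -> U (g s')).
  assert (HE1 : E s1) by (split; [lra | intros s' Hs'; replace s' with s1 by lra; auto]).
  assert (HEb : bound E) by (exists s2; intros s [Hs _]; lra).
  destruct (completeness E HEb (ex_intro _ s1 HE1)) as [m [Hub Hlub]].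
  assert (Hm1 : s1 <= m) by (apply Hub; auto).
  assert (Hm2 : m <= s2) by (apply Hlub; intros s [Hs _]; lra).
  assert (Hbelow : forall s', s1 <= s' < m -> U (g s')).
  { intros s' Hs'.
    destruct (classic (exists s, E s /\ s' <= s)) as [[s [[_ Hs] Hss]] | Hn].
    - apply Hs; lra.
    - exfalso. assert (m <= s'). { apply Hlub. intros s Hs. destruct (Rle_lt_dec s s'); auto.
        exfalso; apply Hn; exists s; split; auto; lra. }
      lra. }
  destruct (Hcov (g m) (HA m ltac:(lra))) as [Um | Vm].
  - destruct (Req_dec m s2) as [E2|E2].
    + subst m. apply (Hdis (g s2)). split. apply HA; lra. split; auto.
    + destruct (cont1_open g U m HU Um (Hg m ltac:(lra))) as [d [Hd Hd']].
      set (t := Rmin (m + d / 2) s2).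
      assert (Ht1 : m < t) by (unfold t; apply Rmin_glb_lt; lra).
      assert (Ht2 : t <= s2) by apply Rmin_r.
      assert (Ht3 : t <= m + d / 2) by apply Rmin_l.
      assert (E t).
      { split. lra. intros s' Hs'.
        destruct (Rlt_le_dec s' m). apply Hbelow; lra.
        apply Hd'. rewrite Rabs_pos_eq; lra. }
      specialize (Hub t H). lra.
  - destruct (Req_dec m s1) as [E1|E1].
    + subst m. apply (Hdis (g s1)). split. apply HA; lra. split; auto.
    + destruct (cont1_open g V m HV Vm (Hg m ltac:(lra))) as [d [Hd Hd']].
      set (t := Rmax (m - d / 2) s1).
      assert (Ht1 : t < m) by (unfold t; apply Rmax_lub_lt; lra).
      assert (Ht2 : s1 <= t) by apply Rmax_r.
      assert (Ht3 : m - d / 2 <= t) by apply Rmax_l.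
      apply (Hdis (g t)). split. apply HA; lra. split.
      apply Hbelow; lra. apply Hd'. rewrite Rabs_left1; lra.
Qed.

Lemma path_connected : a <= b -> connected2 A.
Proof.
  intros Hab U V HU HV Hcov Hdis.
  destruct (classic (forall z, ~ (A z /\ U z))) as [H|H]. left; auto.
  right. intros z [Az Vz].
  apply H. intros z' [Az' Uz'].
  destruct Az as [s2 [Hs2 E2]]. destruct Az' as [s1 [Hs1 E1]]. subst.
  destruct (Rtotal_order s1 s2) as [Hl|[He|Hg']].
  - apply (path_core U V s1 s2); auto; lra.
  - subst. apply (Hdis (g s2)). split. exists s2; auto. auto.
  - apply (path_core V U s2 s1); auto; try lra.
    intros z Hz. destruct (Hcov z Hz); auto.
    intros z [H1 [H2 H3]]. apply (Hdis z); auto.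
Qed.

End PathConn.

Lemma path_level (w : R * R -> R) (g : R -> R * R) a b p s0 :
  a <= s0 <= b -> g s0 = p -> (forall s, a <= s <= b -> cont1 g s) ->
  (forall s, a <= s <= b -> w (g s) = w p) ->
  forall s, a <= s <= b -> same_level_component w p (g s).
Proof.
  intros Hs0 Hp Hc Hw s Hs.
  exists (fun z => exists s, a <= s <= b /\ z = g s).
  split. apply path_connected; auto. lra.
  split. exists s0; split; auto.
  split. exists s; split; auto.
  intros z [s' [Hs' E]]. subst. apply Hw; auto.
Qed.

Lemma deriv_cont_pt (f : R -> R) x l : is_derive f x l -> continuity_pt f x.
Proof.
  intro H. apply continuity_pt_filterlim.
  apply (ex_derive_continuous (K:=R_AbsRing) (V:=R_NormedModule)). eexists; eauto.
Qed.

Section Level.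
Variables w wx wy h hx hy : R * R -> R.
Hypothesis Hwx : forall q, is_derive (fun t : R => w (t, snd q)) (fst q) (wx q).
Hypothesis Hwy : forall q, is_derive (fun t : R => w (fst q, t)) (snd q) (wy q).
Hypothesis Hhx : forall q, is_derive (fun t : R => h (t, snd q)) (fst q) (hx q).
Hypothesis Hhy : forall q, is_derive (fun t : R => h (fst q, t)) (snd q) (hy q).
Hypothesis Cw : forall q, cont2 w q.
Hypothesis Cwx : forall q, cont2 wx q.
Hypothesis Cwy : forall q, cont2 wy q.
Hypothesis Chx : forall q, cont2 hx q.
Hypothesis Chy : forall q, cont2 hy q.
Variables x0 y0 : R.
Hypothesis Hlev : forall q, same_level_component w (x0, y0) q -> h q = h (x0, y0).
Hypothesis Hpos : 0 < wy (x0, y0).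

Lemma mvt_x y a b : exists c, Rmin a b <= c <= Rmax a b /\ w (b, y) - w (a, y) = wx (c, y) * (b - a).
Proof. apply (mvt (fun t => w (t, y)) (fun t => wx (t, y))). intros t _. apply (Hwx (t, y)). Qed.
Lemma mvt_y x a b : exists c, Rmin a b <= c <= Rmax a b /\ w (x, b) - w (x, a) = wy (x, c) * (b - a).
Proof. apply (mvt (fun t => w (x, t)) (fun t => wy (x, t))). intros t _. apply (Hwy (x, t)). Qed.
Lemma mvt_hx y a b : exists c, Rmin a b <= c <= Rmax a b /\ h (b, y) - h (a, y) = hx (c, y) * (b - a).
Proof. apply (mvt (fun t => h (t, y)) (fun t => hx (t, y))). intros t _. apply (Hhx (t, y)). Qed.
Lemma mvt_hy x a b : exists c, Rmin a b <= c <= Rmax a b /\ h (x, b) - h (x, a) = hy (x, c) * (b - a).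
Proof. apply (mvt (fun t => h (x, t)) (fun t => hy (x, t))). intros t _. apply (Hhy (x, t)). Qed.

Lemma minmax_bound a b c u : Rmin a b <= c <= Rmax a b -> Rabs (a - u) < b - u + 1000 -> True.
Proof. auto. Qed.

Lemma level_main : hx (x0, y0) * wy (x0, y0) - hy (x0, y0) * wx (x0, y0) = 0.
Proof.
  set (c := w (x0, y0)).
  destruct (Cwy (x0, y0) (wy (x0, y0) / 2) ltac:(lra)) as [d0 [Hd0 Hwy0]].
  set (r := d0 / 2).
  assert (Hr : 0 < r) by (unfold r; lra).
  assert (Hbox : forall x y, Rabs (x - x0) <= r -> Rabs (y - y0) <= r -> 0 < wy (x, y)).
  { intros x y H1 H2. specialize (Hwy0 (x, y) ltac:(simpl; unfold r in *; lra) ltac:(simpl; unfold r in *; lra)).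
    apply Rabs_lt_between' in Hwy0. lra. }
  assert (Hmono : forall x t1 t2, Rabs (x - x0) <= r -> y0 - r <= t1 -> t1 < t2 -> t2 <= y0 + r -> w (x, t1) < w (x, t2)).
  { intros x t1 t2 Hx H1 H2 H3. destruct (mvt_y x t1 t2) as [cc [Hc E]].
    rewrite Rmin_left, Rmax_right in Hc by lra.
    assert (0 < wy (x, cc)). { apply Hbox; auto. apply Rabs_le; lra. }
    assert (0 < wy (x, cc) * (t2 - t1)) by (apply Rmult_lt_0_compat; lra). lra. }
  assert (Hlo : w (x0, y0 - r) < c) by (apply Hmono; try lra; rewrite Rminus_diag, Rabs_R0; lra).
  assert (Hhi : c < w (x0, y0 + r)) by (apply Hmono; try lra; rewrite Rminus_diag, Rabs_R0; lra).
  destruct (Cw (x0, y0 - r) (c - w (x0, y0 - r)) ltac:(lra)) as [e1 [He1 Hc1]].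
  destruct (Cw (x0, y0 + r) (w (x0, y0 + r) - c) ltac:(lra)) as [e2 [He2 Hc2]].
  set (d1 := Rmin r (Rmin e1 e2)).
  assert (Hd1 : 0 < d1) by (unfold d1; repeat apply Rmin_pos; auto).
  assert (Hd1r : d1 <= r) by apply Rmin_l.
  assert (Hd1e1 : d1 <= e1) by (unfold d1; eapply Rle_trans; [apply Rmin_r | apply Rmin_l]).
  assert (Hd1e2 : d1 <= e2) by (unfold d1; eapply Rle_trans; [apply Rmin_r | apply Rmin_r]).
  assert (Hends : forall x, Rabs (x - x0) < d1 -> w (x, y0 - r) < c /\ c < w (x, y0 + r)).
  { intros x Hx. split.
    - specialize (Hc1 (x, y0 - r) ltac:(simpl; lra) ltac:(simpl; rewrite Rminus_diag, Rabs_R0; lra)).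
      apply Rabs_lt_between' in Hc1. simpl in Hc1. lra.
    - specialize (Hc2 (x, y0 + r) ltac:(simpl; lra) ltac:(simpl; rewrite Rminus_diag, Rabs_R0; lra)).
      apply Rabs_lt_between' in Hc2. simpl in Hc2. lra. }
  assert (Hex : forall x, exists y, Rabs (x - x0) < d1 -> y0 - r < y < y0 + r /\ w (x, y) = c).
  { intro x. destruct (Rlt_dec (Rabs (x - x0)) d1) as [Hx|Hx]. 2: exists y0; intro; contradiction.
    destruct (Hends x Hx) as [Ha Hb].
    assert (Hcont : continuity (fun t => w (x, t) - c)).
    { intro t. apply (deriv_cont_pt _ t (wy (x, t) + 0)). apply D_plus. apply (Hwy (x, t)). apply D_const. }
    destruct (IVT (fun t => w (x, t) - c) (y0 - r) (y0 + r) Hcont ltac:(lra) ltac:(simpl; lra) ltac:(simpl; lra)) as [y [Hy1 Hy2]].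
    exists y. intros _. simpl in Hy2.
    split; [split|]; try lra.
    - destruct (Req_dec y (y0 - r)); [subst; lra | lra].
    - destruct (Req_dec y (y0 + r)); [subst; lra | lra]. }
  set (Y := fun x => proj1_sig (constructive_indefinite_description _ (Hex x))).
  assert (HY : forall x, Rabs (x - x0) < d1 -> y0 - r < Y x < y0 + r /\ w (x, Y x) = c).
  { intros x Hx. unfold Y. destruct (constructive_indefinite_description _ (Hex x)) as [y Hy]. simpl. auto. }
  assert (Huniq : forall x y, Rabs (x - x0) < d1 -> y0 - r <= y <= y0 + r -> w (x, y) = c -> y = Y x).
  { intros x y Hx Hy E. destruct (HY x Hx) as [HY1 HY2].
    destruct (Rtotal_order y (Y x)) as [L|[L|L]]; auto.
    - assert (w (x, y) < w (x, Y x)) by (apply Hmono; lra). lra.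
    - assert (w (x, Y x) < w (x, y)) by (apply Hmono; lra). lra. }
  assert (HY0 : Y x0 = y0).
  { symmetry. apply Huniq. rewrite Rminus_diag, Rabs_R0; lra. lra. reflexivity. }
  assert (HYc : forall s, Rabs (s - x0) < d1 -> forall eps, 0 < eps -> exists eta, 0 < eta /\
             forall x, Rabs (x - s) < eta -> Rabs (x - x0) < d1 -> Rabs (Y x - Y s) < eps).
  { intros s Hs eps He. destruct (HY s Hs) as [[Hs1 Hs2] Hs3].
    set (e' := Rmin eps (Rmin (Y s - (y0 - r)) (y0 + r - Y s)) / 2).
    assert (He' : 0 < e') by (unfold e'; apply Rdiv_lt_0_compat; [repeat apply Rmin_pos; lra | lra]).
    assert (He'1 : e' < eps).
    { unfold e'. pose proof (Rmin_l eps (Rmin (Y s - (y0 - r)) (y0 + r - Y s))). lra. }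
    assert (He'2 : e' < Y s - (y0 - r)).
    { unfold e'. pose proof (Rmin_r eps (Rmin (Y s - (y0 - r)) (y0 + r - Y s))).
      pose proof (Rmin_l (Y s - (y0 - r)) (y0 + r - Y s)). lra. }
    assert (He'3 : e' < y0 + r - Y s).
    { unfold e'. pose proof (Rmin_r eps (Rmin (Y s - (y0 - r)) (y0 + r - Y s))).
      pose proof (Rmin_r (Y s - (y0 - r)) (y0 + r - Y s)). lra. }
    assert (Hs' : Rabs (s - x0) <= r) by lra.
    assert (L1 : w (s, Y s - e') < c) by (rewrite <- Hs3; apply Hmono; lra).
    assert (L2 : c < w (s, Y s + e')) by (rewrite <- Hs3; apply Hmono; lra).
    destruct (Cw (s, Y s - e') (c - w (s, Y s - e')) ltac:(lra)) as [n1 [Hn1 Hcn1]].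
    destruct (Cw (s, Y s + e') (w (s, Y s + e') - c) ltac:(lra)) as [n2 [Hn2 Hcn2]].
    exists (Rmin n1 n2). split. apply Rmin_pos; auto.
    intros x Hx Hx0. pose proof (Rmin_l n1 n2). pose proof (Rmin_r n1 n2).
    specialize (Hcn1 (x, Y s - e') ltac:(simpl; lra) ltac:(simpl; rewrite Rminus_diag, Rabs_R0; lra)).
    specialize (Hcn2 (x, Y s + e') ltac:(simpl; lra) ltac:(simpl; rewrite Rminus_diag, Rabs_R0; lra)).
    apply Rabs_lt_between' in Hcn1. apply Rabs_lt_between' in Hcn2. simpl in Hcn1, Hcn2.
    destruct (HY x Hx0) as [[Hx1 Hx2] Hx3].
    assert (Hxr : Rabs (x - x0) <= r) by lra.
    apply Rabs_lt_between'. split.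
    - destruct (Rlt_le_dec (Y s - eps) (Y x)); auto.
      assert (w (x, Y x) < w (x, Y s - e')) by (apply Hmono; lra). lra.
    - destruct (Rlt_le_dec (Y x) (Y s + eps)); auto.
      assert (w (x, Y s + e') < w (x, Y x)) by (apply Hmono; lra). lra. }
  set (d2 := d1 / 2).
  set (g := fun s => (s, Y s)).
  assert (Hgc : forall s, x0 - d2 <= s <= x0 + d2 -> cont1 g s).
  { intros s Hs eps He.
    assert (Hs' : Rabs (s - x0) < d1) by (apply Rabs_lt_between'; unfold d2 in *; lra).
    destruct (HYc s Hs' eps He) as [eta [Heta Heta']].
    exists (Rmin eta (Rmin eps (d1 - Rabs (s - x0)))). split. repeat apply Rmin_pos; lra.
    intros s' Hs''. pose proof (Rmin_l eta (Rmin eps (d1 - Rabs (s - x0)))).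
    pose proof (Rmin_r eta (Rmin eps (d1 - Rabs (s - x0)))).
    pose proof (Rmin_l eps (d1 - Rabs (s - x0))). pose proof (Rmin_r eps (d1 - Rabs (s - x0))).
    unfold g; simpl. split. lra. apply Heta'. lra.
    replace (s' - x0) with ((s' - s) + (s - x0)) by ring. eapply Rle_lt_trans. apply Rabs_triang. lra. }
  assert (Hhg : forall s, x0 - d2 <= s <= x0 + d2 -> h (s, Y s) = h (x0, y0)).
  { intros s Hs. apply Hlev.
    apply (path_level w g (x0 - d2) (x0 + d2) (x0, y0) x0); auto.
    - unfold d2; lra.
    - unfold g. rewrite HY0. reflexivity.
    - intros s' Hs'. unfold g. assert (Rabs (s' - x0) < d1) by (apply Rabs_lt_between'; unfold d2 in *; lra).
      destruct (HY s' H) as [_ E]. rewrite E. reflexivity. }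
  set (T := hx (x0, y0) * wy (x0, y0) - hy (x0, y0) * wx (x0, y0)).
  destruct (Req_dec T 0) as [HT|HT]; auto. exfalso.
  set (K := (Rabs (hx (x0, y0)) + Rabs (wy (x0, y0)) + 1) + (Rabs (hy (x0, y0)) + Rabs (wx (x0, y0)) + 1)).
  assert (HK : 0 < K) by (unfold K; pose proof (Rabs_pos (hx (x0,y0))); pose proof (Rabs_pos (wy (x0,y0))); pose proof (Rabs_pos (hy (x0,y0))); pose proof (Rabs_pos (wx (x0,y0))); lra).
  assert (HTp : 0 < Rabs T) by (apply Rabs_pos_lt; auto).
  set (e := Rmin 1 (Rabs T / (2 * K))).
  assert (He : 0 < e) by (unfold e; apply Rmin_pos; [lra | apply Rdiv_lt_0_compat; lra]).
  destruct (Chx (x0, y0) e He) as [a1 [Ha1 Ca1]].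
  destruct (Cwy (x0, y0) e He) as [a2 [Ha2 Ca2]].
  destruct (Chy (x0, y0) e He) as [a3 [Ha3 Ca3]].
  destruct (Cwx (x0, y0) e He) as [a4 [Ha4 Ca4]].
  set (a := Rmin (Rmin a1 a2) (Rmin a3 a4)).
  assert (Ha : 0 < a) by (unfold a; repeat apply Rmin_pos; auto).
  assert (Haa : a <= a1 /\ a <= a2 /\ a <= a3 /\ a <= a4).
  { unfold a. pose proof (Rmin_l (Rmin a1 a2) (Rmin a3 a4)). pose proof (Rmin_r (Rmin a1 a2) (Rmin a3 a4)).
    pose proof (Rmin_l a1 a2). pose proof (Rmin_r a1 a2). pose proof (Rmin_l a3 a4). pose proof (Rmin_r a3 a4). lra. }
  assert (Hx00 : Rabs (x0 - x0) < d1) by (rewrite Rminus_diag, Rabs_R0; lra).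
  destruct (HYc x0 Hx00 a Ha) as [eta [Heta Heta']].
  set (x := x0 + Rmin (Rmin eta a) d2 / 2).
  assert (Hm : 0 < Rmin (Rmin eta a) d2) by (repeat apply Rmin_pos; unfold d2; lra).
  assert (Hm1 : Rmin (Rmin eta a) d2 <= eta /\ Rmin (Rmin eta a) d2 <= a /\ Rmin (Rmin eta a) d2 <= d2).
  { pose proof (Rmin_l (Rmin eta a) d2). pose proof (Rmin_r (Rmin eta a) d2). pose proof (Rmin_l eta a). pose proof (Rmin_r eta a). lra. }
  assert (Hxx : 0 < x - x0) by (unfold x; lra).
  assert (Hxa : x - x0 < a) by (unfold x; lra).
  assert (Hxd : Rabs (x - x0) < d1) by (rewrite Rabs_pos_eq; unfold x, d2 in *; lra).
  assert (HYx : Rabs (Y x - y0) < a).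
  { rewrite <- HY0. apply Heta'. rewrite Rabs_pos_eq; unfold x; lra. auto. }
  destruct (HY x Hxd) as [_ HwY].
  destruct (mvt_x (Y x) x0 x) as [c1 [Hq1 E1]].
  destruct (mvt_y x0 y0 (Y x)) as [c2 [Hq2 E2]].
  destruct (mvt_hx (Y x) x0 x) as [c3 [Hq3 E3]].
  destruct (mvt_hy x0 y0 (Y x)) as [c4 [Hq4 E4]].
  rewrite Rmin_left, Rmax_right in Hq1, Hq3 by lra.
  assert (Hh1 : h (x, Y x) = h (x0, y0)) by (apply Hhg; unfold x; lra).
  assert (Ew : wx (c1, Y x) * (x - x0) + wy (x0, c2) * (Y x - y0) = 0).
  { rewrite <- E1, <- E2. fold c. rewrite HwY. ring. }
  assert (Eh : hx (c3, Y x) * (x - x0) + hy (x0, c4) * (Y x - y0) = 0).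
  { rewrite <- E3, <- E4. rewrite Hh1. ring. }
  assert (ED : hx (c3, Y x) * wy (x0, c2) - hy (x0, c4) * wx (c1, Y x) = 0).
  { assert ((x - x0) * (hx (c3, Y x) * wy (x0, c2) - hy (x0, c4) * wx (c1, Y x)) = 0).
    { replace ((x - x0) * (hx (c3, Y x) * wy (x0, c2) - hy (x0, c4) * wx (c1, Y x)))
        with (wy (x0, c2) * (hx (c3, Y x) * (x - x0) + hy (x0, c4) * (Y x - y0))
              - hy (x0, c4) * (wx (c1, Y x) * (x - x0) + wy (x0, c2) * (Y x - y0))) by ring.
      rewrite Ew, Eh. ring. }
    apply Rmult_integral in H. destruct H; auto. lra. }
  assert (Hq2b : Rabs (c2 - y0) < a).
  { unfold Rmin, Rmax in Hq2. destruct (Rle_dec y0 (Y x)); apply Rabs_lt_between' in HYx; apply Rabs_lt_between'; lra. }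
  assert (Hq4b : Rabs (c4 - y0) < a).
  { unfold Rmin, Rmax in Hq4. destruct (Rle_dec y0 (Y x)); apply Rabs_lt_between' in HYx; apply Rabs_lt_between'; lra. }
  assert (Hq1b : Rabs (c1 - x0) < a) by (apply Rabs_lt_between'; lra).
  assert (Hq3b : Rabs (c3 - x0) < a) by (apply Rabs_lt_between'; lra).
  assert (Hz : Rabs (x0 - x0) < a) by (rewrite Rminus_diag, Rabs_R0; lra).
  specialize (Ca1 (c3, Y x) ltac:(simpl; lra) ltac:(simpl; lra)).
  specialize (Ca2 (x0, c2) ltac:(simpl; lra) ltac:(simpl; lra)).
  specialize (Ca3 (x0, c4) ltac:(simpl; lra) ltac:(simpl; lra)).
  specialize (Ca4 (c1, Y x) ltac:(simpl; lra) ltac:(simpl; lra)).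
  assert (Hee1 : e <= 1) by apply Rmin_l.
  assert (Hee2 : e <= Rabs T / (2 * K)) by apply Rmin_r.
  pose proof (prod_close _ _ _ _ e Ca1 Ca2 Hee1) as P1.
  pose proof (prod_close _ _ _ _ e Ca3 Ca4 Hee1) as P2.
  assert (Rabs T <= e * K).
  { replace T with (-(hx (c3, Y x) * wy (x0, c2) - hx (x0, y0) * wy (x0, y0)) + (hy (x0, c4) * wx (c1, Y x) - hy (x0, y0) * wx (x0, y0))) by (unfold T; lra).
    eapply Rle_trans. apply Rabs_triang. rewrite Rabs_Ropp. unfold K. lra. }
  assert (e * K <= Rabs T / 2).
  { apply Rle_trans with (Rabs T / (2 * K) * K). apply Rmult_le_compat_r; lra.
    right; field; lra. }
  lra.
Qed.

End Level.

Lemma D_opp (f : R -> R) x l : is_derive f x l -> is_derive (fun t => - f t) x (- l).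
Proof.
  intro H. replace (- l) with (0 * f x + (-1) * l) by ring.
  apply D_ext with (fun t => (-1) * f t). intro; ring.
  apply D_mult. apply D_const. auto.
Qed.

Lemma cont2_opp F p : cont2 F p -> cont2 (fun q => - F q) p.
Proof.
  intro H. apply (cont2_ext (fun q => (-1) * F q)). intro; ring.
  apply (cont2_mult (fun _ => -1) F). apply cont2_const. auto.
Qed.

Lemma level_gen (w wx wy h hx hy : R * R -> R) x0 y0 :
  (forall q, is_derive (fun t : R => w (t, snd q)) (fst q) (wx q)) ->
  (forall q, is_derive (fun t : R => w (fst q, t)) (snd q) (wy q)) ->
  (forall q, is_derive (fun t : R => h (t, snd q)) (fst q) (hx q)) ->
  (forall q, is_derive (fun t : R => h (fst q, t)) (snd q) (hy q)) ->
  (forall q, cont2 w q) -> (forall q, cont2 wx q) -> (forall q, cont2 wy q) ->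
  (forall q, cont2 hx q) -> (forall q, cont2 hy q) ->
  (forall q, same_level_component w (x0, y0) q -> h q = h (x0, y0)) ->
  wy (x0, y0) <> 0 -> hx (x0, y0) * wy (x0, y0) - hy (x0, y0) * wx (x0, y0) = 0.
Proof.
  intros H1 H2 H3 H4 C1 C2 C3 C4 C5 HL Hne.
  destruct (Rlt_or_le 0 (wy (x0, y0))) as [Hp|Hn].
  - apply (level_main w wx wy h hx hy); auto.
  - assert (Hn' : 0 < - wy (x0, y0)) by (destruct Hn; [lra | contradiction]).
    assert (E := level_main (fun q => - w q) (fun q => - wx q) (fun q => - wy q) h hx hy
      ltac:(intro q; apply D_opp; apply H1) ltac:(intro q; apply D_opp; apply H2) H3 H4
      ltac:(intro; apply cont2_opp; auto) ltac:(intro; apply cont2_opp; auto) ltac:(intro; apply cont2_opp; auto)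
      C4 C5 x0 y0).
    simpl in E.
    assert (HL' : forall q, same_level_component (fun q => - w q) (x0, y0) q -> h q = h (x0, y0)).
    { intros q [A [HA [HA1 [HA2 HA3]]]]. apply HL. exists A. split; auto. split; auto. split; auto.
      intros z Hz. specialize (HA3 z Hz). lra. }
    specialize (E HL' Hn'). lra.
Qed.

Definition GLf (x m u10 u01 u20 u11 u02 u30 u21 u12 u03 u40 u31 u22 u13 u04 : R) := (-2)*m*u10^2*u11 + m*u10^3 + (2)*m*u01*u10*u20 + (-2)*m*u01*u10*u02 + (2)*m*u01^2*u11 + m*u01^2*u10 + (2)*x*m*u01*u10^2 + (2)*x*m*u01^3.
Definition GxLf (x m u10 u01 u20 u11 u02 u30 u21 u12 u03 u40 u31 u22 u13 u04 : R) := (-2)*m*u10*u11*u20 + (-2)*m*u10*u02*u11 + (-2)*m*u10^2*u21 + (3)*m*u10^2*u20 + (2)*m*u01*u20^2 + (4)*m*u01*u11^2 + (-2)*m*u01*u02*u20 + (2)*m*u01*u10*u30 + (-2)*m*u01*u10*u12 + (2)*m*u01*u10*u11 + (2)*m*u01*u10^2 + (2)*m*u01^2*u21 + m*u01^2*u20 + (2)*m*u01^3 + (-2)*x*m*u10^2*u11 + (2)*x*m*u10^3 + (8)*x*m*u01*u10*u20 + (-4)*x*m*u01*u10*u02 + (10)*x*m*u01^2*u11 + (2)*x*m*u01^2*u10 + (4)*x^2*m*u01*u10^2 + (4)*x^2*m*u01^3.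
Definition GyLf (x m u10 u01 u20 u11 u02 u30 u21 u12 u03 u40 u31 u22 u13 u04 : R) := (-4)*m*u10*u11^2 + (2)*m*u10*u02*u20 + (-2)*m*u10*u02^2 + (-2)*m*u10^2*u12 + (5)*m*u10^2*u11 + (-1)*m*u10^3 + (2)*m*u01*u11*u20 + (2)*m*u01*u02*u11 + (2)*m*u01*u10*u21 + (-2)*m*u01*u10*u03 + (-2)*m*u01*u10*u20 + (4)*m*u01*u10*u02 + (2)*m*u01^2*u12 + (-1)*m*u01^2*u11 + (-1)*m*u01^2*u10 + (2)*x*m*u10^2*u02 + (4)*x*m*u01*u10*u11 + (-2)*x*m*u01*u10^2 + (6)*x*m*u01^2*u02 + (-2)*x*m*u01^3.
Definition GxxLf (x m u10 u01 u20 u11 u02 u30 u21 u12 u03 u40 u31 u22 u13 u04 : R) := (4)*m*u11^3 + (-4)*m*u02*u11*u20 + (-6)*m*u10*u20*u21 + (6)*m*u10*u20^2 + (-4)*m*u10*u11*u12 + (2)*m*u10*u11^2 + (-2)*m*u10*u02*u21 + (-2)*m*u10^2*u31 + (3)*m*u10^2*u30 + (2)*m*u10^3 + (6)*m*u01*u20*u30 + (-4)*m*u01*u20*u12 + (12)*m*u01*u11*u21 + (4)*m*u01*u11*u20 + (-2)*m*u01*u02*u30 + (2)*m*u01*u10*u40 + (-2)*m*u01*u10*u22 + (2)*m*u01*u10*u21 + (12)*m*u01*u10*u20 + (-4)*m*u01*u10*u02 + (2)*m*u01^2*u31 + m*u01^2*u30 + (16)*m*u01^2*u11 + (2)*m*u01^2*u10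 + (-8)*x*m*u10*u02*u11 + (-6)*x*m*u10^2*u21 + (12)*x*m*u10^2*u20 + (12)*x*m*u01*u20^2 + (28)*x*m*u01*u11^2 + (-8)*x*m*u01*u02*u20 + (12)*x*m*u01*u10*u30 + (-8)*x*m*u01*u10*u12 + (8)*x*m*u01*u10*u11 + (12)*x*m*u01*u10^2 + (14)*x*m*u01^2*u21 + (4)*x*m*u01^2*u20 + (12)*x*m*u01^3 + (4)*x^2*m*u10^3 + (24)*x^2*m*u01*u10*u20 + (-8)*x^2*m*u01*u10*u02 + (32)*x^2*m*u01^2*u11 + (4)*x^2*m*u01^2*u10 + (8)*x^3*m*u01*u10^2 + (8)*x^3*m*u01^3.
Definition GxyLf (x m u10 u01 u20 u11 u02 u30 u21 u12 u03 u40 u31 u22 u13 u04 : R) := (-2)*m*u11^2*u20 + (2)*m*u02*u20^2 + (2)*m*u02*u11^2 + (-2)*m*u02^2*u20 + (-2)*m*u10*u20*u12 + (-6)*m*u10*u11*u21 + (-2)*m*u10*u11*u03 + (8)*m*u10*u11*u20 + (2)*m*u10*u02*u30 + (-4)*m*u10*u02*u12 + (4)*m*u10*u02*u11 + (-2)*m*u10^2*u22 + (5)*m*u10^2*u21 + (-3)*m*u10^2*u20 + (2)*m*u10^2*u02 + (4)*m*u01*u20*u21 + (-2)*m*u01*u20*u03 + (-2)*m*u01*u20^2 + (2)*m*u01*u11*u30 + (6)*m*u01*u11*u12 + (-2)*m*u01*u11^2 + (2)*m*u01*u02*u21 + (4)*m*u01*u02*u20 + (2)*m*u01*u10*u31 +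 (-2)*m*u01*u10*u13 + (-2)*m*u01*u10*u30 + (4)*m*u01*u10*u12 + (2)*m*u01*u10*u11 + (-2)*m*u01*u10^2 + (2)*m*u01^2*u22 + (-1)*m*u01^2*u21 + (-1)*m*u01^2*u20 + (6)*m*u01^2*u02 + (-2)*m*u01^3 + (-4)*x*m*u10*u11^2 + (8)*x*m*u10*u02*u20 + (-4)*x*m*u10*u02^2 + (-2)*x*m*u10^2*u12 + (8)*x*m*u10^2*u11 + (-2)*x*m*u10^3 + (8)*x*m*u01*u11*u20 + (16)*x*m*u01*u02*u11 + (8)*x*m*u01*u10*u21 + (-4)*x*m*u01*u10*u03 + (-8)*x*m*u01*u10*u20 + (8)*x*m*u01*u10*u02 + (10)*x*m*u01^2*u12 + (-8)*x*m*u01^2*u11 + (-2)*x*m*u01^2*u10 + (4)*x^2*m*u10^2*u02 + (8)*x^2*m*u01*u10*u11 + (-4)*x^2*m*u01*u10^2 + (12)*x^2*m*u01^2*u02 + (-4)*x^2*m*u01^3.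
Definition GyyLf (x m u10 u01 u20 u11 u02 u30 u21 u12 u03 u40 u31 u22 u13 u04 : R) := (-4)*m*u11^3 + (4)*m*u02*u11*u20 + (2)*m*u10*u20*u03 + (-12)*m*u10*u11*u12 + (14)*m*u10*u11^2 + (4)*m*u10*u02*u21 + (-6)*m*u10*u02*u03 + (-4)*m*u10*u02*u20 + (6)*m*u10*u02^2 + (-2)*m*u10^2*u13 + (7)*m*u10^2*u12 + (-8)*m*u10^2*u11 + m*u10^3 + (2)*m*u01*u20*u12 + (4)*m*u01*u11*u21 + (-4)*m*u01*u11*u20 + (6)*m*u01*u02*u12 + (2)*m*u01*u10*u22 + (-2)*m*u01*u10*u04 + (-4)*m*u01*u10*u21 + (6)*m*u01*u10*u03 + (2)*m*u01*u10*u20 + (-6)*m*u01*u10*u02 + (2)*m*u01^2*u13 + (-3)*m*u01^2*u12 + m*u01^2*u10 + (8)*x*m*u10*u02*u11 + (2)*x*m*u10^2*u03 + (-4)*x*m*u10^2*u02 + (4)*x*m*u01*u11^2 + (12)*x*m*u01*u02^2 + (4)*x*m*u01*u10*u12 + (-8)*x*m*u01*u10*u11 + (2)*x*m*u01*u10^2 + (6)*x*m*u01^2*u03 + (-12)*x*m*u01^2*u02 + (2)*x*m*u01^3.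
Definition GLg (x m u10 u01 u20 u11 u02 u30 u21 u12 u03 u40 u31 u22 u13 u04 : R) := (-1)*m*u10*u21 + (-1)*m*u10*u03 + m*u10*u20 + m*u10*u02 + m*u01*u30 + m*u01*u12 + (2)*x*m*u01*u20 + (2)*x*m*u01*u02.
Definition GxLg (x m u10 u01 u20 u11 u02 u30 u21 u12 u03 u40 u31 u22 u13 u04 : R) := (-1)*m*u20*u21 + (-1)*m*u20*u03 + m*u20^2 + m*u11*u30 + m*u11*u12 + m*u02*u20 + (-1)*m*u10*u31 + (-1)*m*u10*u13 + m*u10*u30 + m*u10*u12 + m*u01*u40 + m*u01*u22 + (2)*m*u01*u20 + (2)*m*u01*u02 + (2)*x*m*u11*u20 + (2)*x*m*u02*u11 + (-2)*x*m*u10*u21 + (-2)*x*m*u10*u03 + (2)*x*m*u10*u20 + (2)*x*m*u10*u02 + (4)*x*m*u01*u30 + (4)*x*m*u01*u12 + (4)*x^2*m*u01*u20 + (4)*x^2*m*u01*u02.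
Definition GyLg (x m u10 u01 u20 u11 u02 u30 u21 u12 u03 u40 u31 u22 u13 u04 : R) := (-1)*m*u11*u21 + (-1)*m*u11*u03 + m*u11*u20 + m*u02*u30 + m*u02*u12 + m*u02*u11 + (-1)*m*u10*u22 + (-1)*m*u10*u04 + (2)*m*u10*u21 + (2)*m*u10*u03 + (-1)*m*u10*u20 + (-1)*m*u10*u02 + m*u01*u31 + m*u01*u13 + (-1)*m*u01*u30 + (-1)*m*u01*u12 + (2)*x*m*u02*u20 + (2)*x*m*u02^2 + (2)*x*m*u01*u21 + (2)*x*m*u01*u03 + (-2)*x*m*u01*u20 + (-2)*x*m*u01*u02.
Definition P10 (x m u10 u01 u20 u11 u02 u30 u21 u12 u03 u40 u31 u22 u13 u04 : R) := (4)*m^2*u01*u11^3 + (-4)*m^2*u01*u02*u11*u20 + (-4)*m^2*u01*u10*u20*u21 + (2)*m^2*u01*u10*u20*u03 + (4)*m^2*u01*u10*u20^2 + (-2)*m^2*u01*u10*u11*u30 + (-6)*m^2*u01*u10*u11*u12 + (2)*m^2*u01*u10*u11^2 + (-2)*m^2*u01*u10*u02*u21 + (-2)*m^2*u01*u10*u02*u20 + (2)*m^2*u01*u10^2*u13 + m^2*u01*u10^2*u30 + (-2)*m^2*u01*u10^2*u12 + (2)*m^2*u01*u10^3 + (6)*m^2*u01^2*u20*u30 + (-4)*m^2*u01^2*u20*u12 + (12)*m^2*u01^2*u11*u21 + (4)*m^2*u01^2*u11*u20 + (-2)*m^2*u01^2*u02*u30 + (-4)*m^2*u01^2*u10*u22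 + (2)*m^2*u01^2*u10*u21 + (8)*m^2*u01^2*u10*u20 + (-8)*m^2*u01^2*u10*u02 + (2)*m^2*u01^3*u31 + m^2*u01^3*u30 + (16)*m^2*u01^3*u11 + (2)*m^2*u01^3*u10 + (-4)*x*m^2*u01*u10*u11*u20 + (-12)*x*m^2*u01*u10*u02*u11 + (-2)*x*m^2*u01*u10^2*u21 + (4)*x*m^2*u01*u10^2*u03 + (8)*x*m^2*u01*u10^2*u20 + (-4)*x*m^2*u01*u10^2*u02 + (12)*x*m^2*u01^2*u20^2 + (28)*x*m^2*u01^2*u11^2 + (-8)*x*m^2*u01^2*u02*u20 + (4)*x*m^2*u01^2*u10*u30 + (-16)*x*m^2*u01^2*u10*u12 + (8)*x*m^2*u01^2*u10*u11 + (12)*x*m^2*u01^2*u10^2 + (14)*x*m^2*u01^3*u21 + (4)*x*m^2*u01^3*u20 + (12)*x*m^2*u01^4 + (4)*x^2*m^2*u01*u10^3 + (16)*x^2*m^2*u01^2*u10*u20 + (-16)*x^2*m^2*u01^2*u10*u02 + (32)*x^2*m^2*u01^3*u11 + (4)*x^2*m^2*u01^3*u10 + (8)*x^3*m^2*u01^2*u10^2 + (8)*x^3*m^2*u01^4.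
Definition P11 (x m u10 u01 u20 u11 u02 u30 u21 u12 u03 u40 u31 u22 u13 u04 : R) := (4)*m^3*u01^2*u11^3 + (-4)*m^3*u01^2*u02*u11*u20 + (-4)*m^3*u01^2*u10*u20*u21 + (2)*m^3*u01^2*u10*u20*u03 + (4)*m^3*u01^2*u10*u20^2 + (-2)*m^3*u01^2*u10*u11*u30 + (-6)*m^3*u01^2*u10*u11*u12 + (2)*m^3*u01^2*u10*u11^2 + (-2)*m^3*u01^2*u10*u02*u21 + (-2)*m^3*u01^2*u10*u02*u20 + (2)*m^3*u01^2*u10^2*u13 + m^3*u01^2*u10^2*u30 + (-2)*m^3*u01^2*u10^2*u12 + (2)*m^3*u01^2*u10^3 + (6)*m^3*u01^3*u20*u30 + (-4)*m^3*u01^3*u20*u12 + (14)*m^3*u01^3*u11*u21 + (2)*m^3*u01^3*u11*u03 + (2)*m^3*u01^3*u11*u20 + (-4)*m^3*u01^3*u02*u30 + (-2)*m^3*u01^3*u02*u12 + (-2)*m^3*u01^3*u02*u11 + (-2)*m^3*u01^3*u10*u22 + (2)*m^3*u01^3*u10*u04 + (-2)*m^3*u01^3*u10*u21 + (-4)*m^3*u01^3*u10*u03 + (10)*m^3*u01^3*u10*u20 + (-6)*m^3*u01^3*u10*u02 + (-2)*m^3*u01^4*u13 + (3)*m^3*u01^4*u30 + (2)*m^3*u01^4*u12 + (16)*m^3*u01^4*u11 + (2)*m^3*u01^4*u10 + (-4)*x*m^3*u01^2*u10*u11*u20 + (-12)*x*m^3*u01^2*u10*u02*u11 + (-2)*x*m^3*u01^2*u10^2*u21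 + (4)*x*m^3*u01^2*u10^2*u03 + (8)*x*m^3*u01^2*u10^2*u20 + (-4)*x*m^3*u01^2*u10^2*u02 + (12)*x*m^3*u01^3*u20^2 + (28)*x*m^3*u01^3*u11^2 + (-12)*x*m^3*u01^3*u02*u20 + (-4)*x*m^3*u01^3*u02^2 + (4)*x*m^3*u01^3*u10*u30 + (-16)*x*m^3*u01^3*u10*u12 + (8)*x*m^3*u01^3*u10*u11 + (12)*x*m^3*u01^3*u10^2 + (10)*x*m^3*u01^4*u21 + (-4)*x*m^3*u01^4*u03 + (8)*x*m^3*u01^4*u20 + (4)*x*m^3*u01^4*u02 + (12)*x*m^3*u01^5 + (4)*x^2*m^3*u01^2*u10^3 + (16)*x^2*m^3*u01^3*u10*u20 + (-16)*x^2*m^3*u01^3*u10*u02 + (32)*x^2*m^3*u01^4*u11 + (4)*x^2*m^3*u01^4*u10 + (8)*x^3*m^3*u01^3*u10^2 + (8)*x^3*m^3*u01^5.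
Definition P12 (x m u10 u01 u20 u11 u02 u30 u21 u12 u03 u40 u31 u22 u13 u04 : R) := (-2)*m^2*u01*u11^2*u20 + (2)*m^2*u01*u02*u20^2 + (2)*m^2*u01*u02*u11^2 + (-2)*m^2*u01*u02^2*u20 + (-2)*m^2*u01*u10*u20*u12 + (-4)*m^2*u01*u10*u11*u21 + (6)*m^2*u01*u10*u11*u20 + (-6)*m^2*u01*u10*u02*u12 + (2)*m^2*u01*u10*u02*u11 + (2)*m^2*u01*u10^2*u04 + m^2*u01*u10^2*u21 + (-4)*m^2*u01*u10^2*u03 + (-1)*m^2*u01*u10^2*u20 + (4)*m^2*u01*u10^2*u02 + (4)*m^2*u01^2*u20*u21 + (-2)*m^2*u01^2*u20*u03 + (-2)*m^2*u01^2*u20^2 + (2)*m^2*u01^2*u11*u30 + (6)*m^2*u01^2*u11*u12 + (-2)*m^2*u01^2*u11^2 + (2)*m^2*u01^2*u02*u21 + (4)*m^2*u01^2*u02*u20 + (-4)*m^2*u01^2*u10*u13 + (6)*m^2*u01^2*u10*u12 + (2)*m^2*u01^2*u10*u11 + (-2)*m^2*u01^2*u10^2 + (2)*m^2*u01^3*u22 + (-1)*m^2*u01^3*u21 + (-1)*m^2*u01^3*u20 + (6)*m^2*u01^3*u02 + (-2)*m^2*u01^4 + (-4)*x*m^2*u01*u10*u11^2 + (4)*x*m^2*u01*u10*u02*u20 + (-8)*x*m^2*u01*u10*u02^2 + (-2)*x*m^2*u01*u10^2*u12 + (8)*x*m^2*u01*u10^2*u11 + (-2)*x*m^2*u01*u10^3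 + (8)*x*m^2*u01^2*u11*u20 + (16)*x*m^2*u01^2*u02*u11 + (4)*x*m^2*u01^2*u10*u21 + (-8)*x*m^2*u01^2*u10*u03 + (-4)*x*m^2*u01^2*u10*u20 + (12)*x*m^2*u01^2*u10*u02 + (10)*x*m^2*u01^3*u12 + (-8)*x*m^2*u01^3*u11 + (-2)*x*m^2*u01^3*u10 + (4)*x^2*m^2*u01*u10^2*u02 + (8)*x^2*m^2*u01^2*u10*u11 + (-4)*x^2*m^2*u01^2*u10^2 + (12)*x^2*m^2*u01^3*u02 + (-4)*x^2*m^2*u01^4.
Definition P13 (x m u10 u01 u20 u11 u02 u30 u21 u12 u03 u40 u31 u22 u13 u04 : R) := (-8)*m^4*u01^3*u10^2*u20*u21 + (8)*m^4*u01^3*u10^2*u20*u03 + (8)*m^4*u01^3*u10^2*u20^2 + (-4)*m^4*u01^3*u10^2*u11*u30 + (-36)*m^4*u01^3*u10^2*u11*u12 + (32)*m^4*u01^3*u10^2*u11^2 + (4)*m^4*u01^3*u10^2*u02*u21 + (-12)*m^4*u01^3*u10^2*u02*u03 + (-12)*m^4*u01^3*u10^2*u02*u20 + (12)*m^4*u01^3*u10^2*u02^2 + (2)*m^4*u01^3*u10^3*u30 + (10)*m^4*u01^3*u10^3*u12 + (-16)*m^4*u01^3*u10^3*u11 + (6)*m^4*u01^3*u10^4 + (12)*m^4*u01^4*u10*u20*u30 + (-4)*m^4*u01^4*u10*u20*u12 + (36)*m^4*u01^4*u10*u11*u21 + (4)*m^4*u01^4*u10*u11*u03 + (-4)*m^4*u01^4*u10*u11*u20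 + (-8)*m^4*u01^4*u10*u02*u30 + (8)*m^4*u01^4*u10*u02*u12 + (-4)*m^4*u01^4*u10*u02*u11 + (-12)*m^4*u01^4*u10^2*u21 + (4)*m^4*u01^4*u10^2*u03 + (24)*m^4*u01^4*u10^2*u20 + (-24)*m^4*u01^4*u10^2*u02 + (6)*m^4*u01^5*u10*u30 + (-2)*m^4*u01^5*u10*u12 + (32)*m^4*u01^5*u10*u11 + (6)*m^4*u01^5*u10^2 + (-8)*x*m^4*u01^3*u10^2*u11*u20 + (-8)*x*m^4*u01^3*u10^2*u02*u11 + (-4)*x*m^4*u01^3*u10^3*u21 + (12)*x*m^4*u01^3*u10^3*u03 + (16)*x*m^4*u01^3*u10^3*u20 + (-16)*x*m^4*u01^3*u10^3*u02 + (24)*x*m^4*u01^4*u10*u20^2 + (64)*x*m^4*u01^4*u10*u11^2 + (-24)*x*m^4*u01^4*u10*u02*u20 + (16)*x*m^4*u01^4*u10*u02^2 + (8)*x*m^4*u01^4*u10^2*u30 + (-24)*x*m^4*u01^4*u10^2*u12 + (28)*x*m^4*u01^4*u10^3 + (20)*x*m^4*u01^5*u10*u21 + (4)*x*m^4*u01^5*u10*u03 + (16)*x*m^4*u01^5*u10*u20 + (-16)*x*m^4*u01^5*u10*u02 + (28)*x*m^4*u01^6*u10 + (8)*x^2*m^4*u01^3*u10^4 + (32)*x^2*m^4*u01^4*u10^2*u20 + (-32)*x^2*m^4*u01^4*u10^2*u02 + (64)*x^2*m^4*u01^5*u10*u11 + (8)*x^2*m^4*u01^5*u10^2 + (16)*x^3*m^4*u01^4*u10^3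 + (16)*x^3*m^4*u01^6*u10.
Definition P14 (x m u10 u01 u20 u11 u02 u30 u21 u12 u03 u40 u31 u22 u13 u04 : R) := (-4)*m^3*u01^2*u10*u11^2*u20 + (4)*m^3*u01^2*u10*u02*u20^2 + (4)*m^3*u01^2*u10*u02*u11^2 + (-4)*m^3*u01^2*u10*u02^2*u20 + (-4)*m^3*u01^2*u10^2*u20*u12 + (-8)*m^3*u01^2*u10^2*u11*u21 + (12)*m^3*u01^2*u10^2*u11*u20 + (-12)*m^3*u01^2*u10^2*u02*u12 + (4)*m^3*u01^2*u10^2*u02*u11 + (4)*m^3*u01^2*u10^3*u04 + (2)*m^3*u01^2*u10^3*u21 + (-8)*m^3*u01^2*u10^3*u03 + (-2)*m^3*u01^2*u10^3*u20 + (8)*m^3*u01^2*u10^3*u02 + (8)*m^3*u01^3*u11^3 + (-8)*m^3*u01^3*u02*u11*u20 + (8)*m^3*u01^3*u10*u20*u21 + (-8)*m^3*u01^3*u10*u20*u03 + (-4)*m^3*u01^3*u10*u20^2 + (4)*m^3*u01^3*u10*u11*u30 + (36)*m^3*u01^3*u10*u11*u12 + (-32)*m^3*u01^3*u10*u11^2 + (-4)*m^3*u01^3*u10*u02*u21 + (12)*m^3*u01^3*u10*u02*u03 + (16)*m^3*u01^3*u10*u02*u20 + (-12)*m^3*u01^3*u10*u02^2 + (-4)*m^3*u01^3*u10^2*u13 + (-2)*m^3*u01^3*u10^2*u12 + (20)*m^3*u01^3*u10^2*u11 + (-6)*m^3*u01^3*u10^3 + (-4)*m^3*u01^4*u20*u12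 + (-8)*m^3*u01^4*u11*u21 + (8)*m^3*u01^4*u11*u20 + (-12)*m^3*u01^4*u02*u12 + (4)*m^3*u01^4*u10*u04 + (6)*m^3*u01^4*u10*u21 + (-12)*m^3*u01^4*u10*u03 + (-6)*m^3*u01^4*u10*u20 + (24)*m^3*u01^4*u10*u02 + (-4)*m^3*u01^5*u13 + (6)*m^3*u01^5*u12 + (-6)*m^3*u01^5*u10 + (-8)*x*m^3*u01^2*u10^2*u11^2 + (8)*x*m^3*u01^2*u10^2*u02*u20 + (-16)*x*m^3*u01^2*u10^2*u02^2 + (-4)*x*m^3*u01^2*u10^3*u12 + (16)*x*m^3*u01^2*u10^3*u11 + (-4)*x*m^3*u01^2*u10^4 + (16)*x*m^3*u01^3*u10*u11*u20 + (16)*x*m^3*u01^3*u10*u02*u11 + (8)*x*m^3*u01^3*u10^2*u21 + (-20)*x*m^3*u01^3*u10^2*u03 + (-8)*x*m^3*u01^3*u10^2*u20 + (32)*x*m^3*u01^3*u10^2*u02 + (-8)*x*m^3*u01^4*u11^2 + (-24)*x*m^3*u01^4*u02^2 + (12)*x*m^3*u01^4*u10*u12 + (-8)*x*m^3*u01^4*u10^2 + (-12)*x*m^3*u01^5*u03 + (24)*x*m^3*u01^5*u02 + (-4)*x*m^3*u01^6 + (8)*x^2*m^3*u01^2*u10^3*u02 + (16)*x^2*m^3*u01^3*u10^2*u11 + (-8)*x^2*m^3*u01^3*u10^3 + (24)*x^2*m^3*u01^4*u10*u02 + (-8)*x^2*m^3*u01^5*u10.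
Definition P15 (x m u10 u01 u20 u11 u02 u30 u21 u12 u03 u40 u31 u22 u13 u04 : R) := (2)*m^2*u01*u10*u11*u20 + (2)*m^2*u01*u10*u02*u11 + (-2)*m^2*u01*u10^2*u03 + (-1)*m^2*u01*u10^2*u20 + (2)*m^2*u01*u10^2*u02 + (-2)*m^2*u01^2*u20^2 + (-4)*m^2*u01^2*u11^2 + (2)*m^2*u01^2*u02*u20 + (4)*m^2*u01^2*u10*u12 + (-2)*m^2*u01^2*u10*u11 + (-2)*m^2*u01^2*u10^2 + (-2)*m^2*u01^3*u21 + (-1)*m^2*u01^3*u20 + (-2)*m^2*u01^4 + (2)*x*m^2*u01*u10^2*u11 + (-2)*x*m^2*u01*u10^3 + (-4)*x*m^2*u01^2*u10*u20 + (8)*x*m^2*u01^2*u10*u02 + (-10)*x*m^2*u01^3*u11 + (-2)*x*m^2*u01^3*u10 + (-4)*x^2*m^2*u01^2*u10^2 + (-4)*x^2*m^2*u01^4.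
Definition P16 (x m u10 u01 u20 u11 u02 u30 u21 u12 u03 u40 u31 u22 u13 u04 : R) := (4)*m^3*u01^2*u10^2*u11*u20 + (4)*m^3*u01^2*u10^2*u02*u11 + (-4)*m^3*u01^2*u10^3*u03 + (-2)*m^3*u01^2*u10^3*u20 + (4)*m^3*u01^2*u10^3*u02 + (-4)*m^3*u01^3*u10*u20^2 + (-16)*m^3*u01^3*u10*u11^2 + (8)*m^3*u01^3*u10*u02*u20 + (-4)*m^3*u01^3*u10*u02^2 + (4)*m^3*u01^3*u10^2*u12 + (6)*m^3*u01^3*u10^2*u11 + (-6)*m^3*u01^3*u10^3 + (4)*m^3*u01^4*u11*u20 + (4)*m^3*u01^4*u02*u11 + (-4)*m^3*u01^4*u10*u03 + (-6)*m^3*u01^4*u10*u20 + (8)*m^3*u01^4*u10*u02 + (4)*m^3*u01^5*u12 + (-2)*m^3*u01^5*u11 + (-6)*m^3*u01^5*u10 + (4)*x*m^3*u01^2*u10^3*u11 + (-4)*x*m^3*u01^2*u10^4 + (-8)*x*m^3*u01^3*u10^2*u20 + (20)*x*m^3*u01^3*u10^2*u02 + (-12)*x*m^3*u01^4*u10*u11 + (-8)*x*m^3*u01^4*u10^2 + (12)*x*m^3*u01^5*u02 + (-4)*x*m^3*u01^6 + (-8)*x^2*m^3*u01^3*u10^3 + (-8)*x^2*m^3*u01^5*u10.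
Definition P17 (x m u10 u01 u20 u11 u02 u30 u21 u12 u03 u40 u31 u22 u13 u04 : R) := (-8)*m^5*u01^3*u10^3*u11^2*u20 + (-8)*m^5*u01^3*u10^3*u02*u11^2 + (-8)*m^5*u01^3*u10^4*u11*u21 + (16)*m^5*u01^3*u10^4*u11*u20 + (4)*m^5*u01^3*u10^4*u02*u11 + (4)*m^5*u01^3*u10^5*u21 + (-6)*m^5*u01^3*u10^5*u20 + (32)*m^5*u01^4*u10^2*u11*u20^2 + (16)*m^5*u01^4*u10^2*u11^3 + (-16)*m^5*u01^4*u10^2*u02^2*u11 + (8)*m^5*u01^4*u10^3*u20*u21 + (16)*m^5*u01^4*u10^3*u20*u03 + (-24)*m^5*u01^4*u10^3*u20^2 + (-80)*m^5*u01^4*u10^3*u11*u12 + (64)*m^5*u01^4*u10^3*u11^2 + (-8)*m^5*u01^4*u10^3*u02*u21 + (-24)*m^5*u01^4*u10^3*u02*u03 + (4)*m^5*u01^4*u10^3*u02*u20 + (24)*m^5*u01^4*u10^3*u02^2 + (24)*m^5*u01^4*u10^4*u12 + (-28)*m^5*u01^4*u10^4*u11 + (8)*m^5*u01^4*u10^5 + (-24)*m^5*u01^5*u10*u20^3 + (-48)*m^5*u01^5*u10*u11^2*u20 + (40)*m^5*u01^5*u10*u02*u20^2 + (32)*m^5*u01^5*u10*u02*u11^2 + (-16)*m^5*u01^5*u10*u02^2*u20 + (16)*m^5*u01^5*u10^2*u20*u12 + (80)*m^5*u01^5*u10^2*u11*u21 + (8)*m^5*u01^5*u10^2*u11*u03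 + (-16)*m^5*u01^5*u10^2*u11*u20 + (20)*m^5*u01^5*u10^2*u02*u11 + (-16)*m^5*u01^5*u10^3*u21 + (8)*m^5*u01^5*u10^3*u03 + (4)*m^5*u01^5*u10^3*u20 + (-32)*m^5*u01^5*u10^3*u02 + (-24)*m^5*u01^6*u10*u20*u21 + (-24)*m^5*u01^6*u10*u20^2 + (-24)*m^5*u01^6*u10*u11^2 + (16)*m^5*u01^6*u10*u02*u21 + (20)*m^5*u01^6*u10*u02*u20 + (8)*m^5*u01^6*u10^2*u12 + (60)*m^5*u01^6*u10^2*u11 + (-4)*m^5*u01^6*u10^3 + (-12)*m^5*u01^7*u10*u21 + (-30)*m^5*u01^7*u10*u20 + (16)*m^5*u01^7*u10*u02 + (-12)*m^5*u01^8*u10 + (-8)*x*m^5*u01^3*u10^4*u11^2 + (12)*x*m^5*u01^3*u10^5*u11 + (-4)*x*m^5*u01^3*u10^6 + (56)*x*m^5*u01^4*u10^3*u11*u20 + (-32)*x*m^5*u01^4*u10^3*u02*u11 + (8)*x*m^5*u01^4*u10^4*u21 + (24)*x*m^5*u01^4*u10^4*u03 + (-32)*x*m^5*u01^4*u10^4*u20 + (-8)*x*m^5*u01^4*u10^4*u02 + (-64)*x*m^5*u01^5*u10^2*u20^2 + (136)*x*m^5*u01^5*u10^2*u11^2 + (80)*x*m^5*u01^5*u10^2*u02*u20 + (-32)*x*m^5*u01^5*u10^3*u12 + (-16)*x*m^5*u01^5*u10^3*u11 + (24)*x*m^5*u01^5*u10^4 + (-120)*x*m^5*u01^6*u10*u11*u20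 + (80)*x*m^5*u01^6*u10*u02*u11 + (24)*x*m^5*u01^6*u10^2*u21 + (8)*x*m^5*u01^6*u10^2*u03 + (-48)*x*m^5*u01^6*u10^2*u20 + (8)*x*m^5*u01^6*u10^2*u02 + (-60)*x*m^5*u01^7*u10*u11 + (28)*x*m^5*u01^7*u10^2 + (32)*x^2*m^5*u01^4*u10^4*u11 + (-8)*x^2*m^5*u01^4*u10^5 + (-48)*x^2*m^5*u01^5*u10^3*u20 + (64)*x^2*m^5*u01^6*u10^2*u11 + (-32)*x^2*m^5*u01^6*u10^3 + (-48)*x^2*m^5*u01^7*u10*u20 + (32)*x^2*m^5*u01^7*u10*u02 + (-24)*x^2*m^5*u01^8*u10.
Definition P18 (x m u10 u01 u20 u11 u02 u30 u21 u12 u03 u40 u31 u22 u13 u04 : R) := (-32)*m^6*u01^3*u10^5*u11^3 + (16)*m^6*u01^3*u10^5*u02*u11*u20 + (-16)*m^6*u01^3*u10^5*u02^2*u11 + (-16)*m^6*u01^3*u10^6*u11*u12 + (56)*m^6*u01^3*u10^6*u11^2 + (-8)*m^6*u01^3*u10^6*u02*u20 + (8)*m^6*u01^3*u10^6*u02^2 + (8)*m^6*u01^3*u10^7*u12 + (-28)*m^6*u01^3*u10^7*u11 + (4)*m^6*u01^3*u10^8 + (32)*m^6*u01^4*u10^4*u11^2*u20 + (-16)*m^6*u01^4*u10^4*u02*u20^2 + (-32)*m^6*u01^4*u10^4*u02*u11^2 + (32)*m^6*u01^4*u10^4*u02^2*u20 + (-16)*m^6*u01^4*u10^4*u02^3 +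 (16)*m^6*u01^4*u10^5*u20*u12 + (-16)*m^6*u01^4*u10^5*u11*u03 + (-32)*m^6*u01^4*u10^5*u11*u20 + (-16)*m^6*u01^4*u10^5*u02*u12 + (72)*m^6*u01^4*u10^5*u02*u11 + (8)*m^6*u01^4*u10^6*u03 + (4)*m^6*u01^4*u10^6*u20 + (-24)*m^6*u01^4*u10^6*u02 + (48)*m^6*u01^5*u10^3*u11*u20^2 + (352)*m^6*u01^5*u10^3*u11^3 + (-160)*m^6*u01^5*u10^3*u02*u11*u20 + (144)*m^6*u01^5*u10^3*u02^2*u11 + (48)*m^6*u01^5*u10^4*u20*u03 + (-32)*m^6*u01^5*u10^4*u20^2 + (16)*m^6*u01^5*u10^4*u11*u12 + (-344)*m^6*u01^5*u10^4*u11^2 + (-64)*m^6*u01^5*u10^4*u02*u03 + (-8)*m^6*u01^5*u10^4*u02*u20 + (48)*m^6*u01^5*u10^4*u02^2 + (8)*m^6*u01^5*u10^5*u12 + (100)*m^6*u01^5*u10^5*u11 + (4)*m^6*u01^5*u10^6 + (-48)*m^6*u01^6*u10^2*u20^3 + (-352)*m^6*u01^6*u10^2*u11^2*u20 + (128)*m^6*u01^6*u10^2*u02*u20^2 + (-32)*m^6*u01^6*u10^2*u02*u11^2 + (-112)*m^6*u01^6*u10^2*u02^2*u20 + (32)*m^6*u01^6*u10^2*u02^3 + (-32)*m^6*u01^6*u10^3*u20*u12 + (176)*m^6*u01^6*u10^3*u11*u03 + (288)*m^6*u01^6*u10^3*u11*u20 + (48)*m^6*u01^6*u10^3*u02*u12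 + (-336)*m^6*u01^6*u10^3*u02*u11 + (-16)*m^6*u01^6*u10^4*u03 + (-40)*m^6*u01^6*u10^4*u20 + (8)*m^6*u01^6*u10^4*u02 + (48)*m^6*u01^7*u10*u11*u20^2 + (16)*m^6*u01^7*u10*u02*u11*u20 + (-32)*m^6*u01^7*u10*u02^2*u11 + (-48)*m^6*u01^7*u10^2*u20*u03 + (-96)*m^6*u01^7*u10^2*u20^2 + (-160)*m^6*u01^7*u10^2*u11*u12 + (-16)*m^6*u01^7*u10^2*u11^2 + (32)*m^6*u01^7*u10^2*u02*u03 + (192)*m^6*u01^7*u10^2*u02*u20 + (-88)*m^6*u01^7*u10^2*u02^2 + (24)*m^6*u01^7*u10^3*u12 + (244)*m^6*u01^7*u10^3*u11 + (-36)*m^6*u01^7*u10^4 + (48)*m^6*u01^8*u10*u20*u12 + (-32)*m^6*u01^8*u10*u02*u12 + (40)*m^6*u01^8*u10*u02*u11 + (-24)*m^6*u01^8*u10^2*u03 + (-108)*m^6*u01^8*u10^2*u20 + (96)*m^6*u01^8*u10^2*u02 + (24)*m^6*u01^9*u10*u12 + (-12)*m^6*u01^9*u10*u11 + (-36)*m^6*u01^9*u10^2 + (16)*x*m^6*u01^3*u10^6*u02*u11 + (-8)*x*m^6*u01^3*u10^7*u02 + (48)*x*m^6*u01^4*u10^5*u11^2 + (-32)*x*m^6*u01^4*u10^5*u02*u20 + (32)*x*m^6*u01^4*u10^5*u02^2 + (16)*x*m^6*u01^4*u10^6*u12 + (-48)*x*m^6*u01^4*u10^6*u11 + (8)*x*m^6*u01^4*u10^7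 + (64)*x*m^6*u01^5*u10^4*u11*u20 + (-160)*x*m^6*u01^5*u10^4*u02*u11 + (64)*x*m^6*u01^5*u10^5*u03 + (-32)*x*m^6*u01^5*u10^5*u20 + (-56)*x*m^6*u01^5*u10^5*u02 + (-128)*x*m^6*u01^6*u10^3*u20^2 + (48)*x*m^6*u01^6*u10^3*u11^2 + (112)*x*m^6*u01^6*u10^3*u02*u20 + (64)*x*m^6*u01^6*u10^3*u02^2 + (-32)*x*m^6*u01^6*u10^4*u12 + (64)*x*m^6*u01^6*u10^4*u11 + (56)*x*m^6*u01^6*u10^5 + (-192)*x*m^6*u01^7*u10^2*u11*u20 + (-432)*x*m^6*u01^7*u10^2*u02*u11 + (64)*x*m^6*u01^7*u10^3*u03 + (-80)*x*m^6*u01^7*u10^3*u20 + (56)*x*m^6*u01^7*u10^3*u02 + (144)*x*m^6*u01^8*u10*u02*u20 + (-96)*x*m^6*u01^8*u10*u02^2 + (-48)*x*m^6*u01^8*u10^2*u12 + (112)*x*m^6*u01^8*u10^2*u11 + (24)*x*m^6*u01^8*u10^3 + (-48)*x*m^6*u01^9*u10*u20 + (104)*x*m^6*u01^9*u10*u02 + (-24)*x*m^6*u01^10*u10 + (-16)*x^2*m^6*u01^4*u10^6*u02 + (32)*x^2*m^6*u01^5*u10^5*u11 + (-96)*x^2*m^6*u01^6*u10^4*u20 + (-96)*x^2*m^6*u01^6*u10^4*u02 + (32)*x^2*m^6*u01^7*u10^3*u11 + (-96)*x^2*m^6*u01^8*u10^2*u20 + (-80)*x^2*m^6*u01^8*u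10^2*u02.
Definition P19 (x m u10 u01 u20 u11 u02 u30 u21 u12 u03 u40 u31 u22 u13 u04 : R) := (128)*m^9*u01^5*u10^8*u11^3 + (-64)*m^9*u01^5*u10^8*u02*u11*u20 + (64)*m^9*u01^5*u10^8*u02^2*u11 + (64)*m^9*u01^5*u10^9*u11*u12 + (-224)*m^9*u01^5*u10^9*u11^2 + (32)*m^9*u01^5*u10^9*u02*u20 + (-32)*m^9*u01^5*u10^9*u02^2 + (-32)*m^9*u01^5*u10^10*u12 + (112)*m^9*u01^5*u10^10*u11 + (-16)*m^9*u01^5*u10^11 + (-64)*m^9*u01^6*u10^7*u11^2*u20 + (64)*m^9*u01^6*u10^7*u02*u20^2 + (192)*m^9*u01^6*u10^7*u02*u11^2 + (-128)*m^9*u01^6*u10^7*u02^2*u20 + (64)*m^9*u01^6*u10^7*u02^3 + (-64)*m^9*u01^6*u10^8*u20*u12 + (64)*m^9*u01^6*u10^8*u11*u20 + (64)*m^9*u01^6*u10^8*u02*u12 + (-256)*m^9*u01^6*u10^8*u02*u11 + (64)*m^9*u01^6*u10^9*u02 + (-448)*m^9*u01^7*u10^6*u11*u20^2 + (-1536)*m^9*u01^7*u10^6*u11^3 + (768)*m^9*u01^7*u10^6*u02*u11*u20 + (-320)*m^9*u01^7*u10^6*u02^2*u11 + (256)*m^9*u01^7*u10^7*u20^2 + (64)*m^9*u01^7*u10^7*u11*u12 + (1376)*m^9*u01^7*u10^7*u11^2 + (-320)*m^9*u01^7*u10^7*u02*u20 + (64)*m^9*u01^7*u10^7*u02^2 +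 (-96)*m^9*u01^7*u10^8*u12 + (-432)*m^9*u01^7*u10^8*u11 + (16)*m^9*u01^7*u10^9 + (384)*m^9*u01^8*u10^5*u20^3 + (1408)*m^9*u01^8*u10^5*u11^2*u20 + (-1088)*m^9*u01^8*u10^5*u02*u20^2 + (-1408)*m^9*u01^8*u10^5*u02*u11^2 + (1024)*m^9*u01^8*u10^5*u02^2*u20 + (-320)*m^9*u01^8*u10^5*u02^3 + (-128)*m^9*u01^8*u10^6*u20*u12 + (-1024)*m^9*u01^8*u10^6*u11*u20 + (128)*m^9*u01^8*u10^6*u02*u12 + (896)*m^9*u01^8*u10^6*u02*u11 + (448)*m^9*u01^8*u10^7*u20 + (-320)*m^9*u01^8*u10^7*u02 + (320)*m^9*u01^9*u10^4*u11*u20^2 + (1408)*m^9*u01^9*u10^4*u11^3 + (-704)*m^9*u01^9*u10^4*u02*u11*u20 + (384)*m^9*u01^9*u10^4*u02^2*u11 + (640)*m^9*u01^9*u10^5*u20^2 + (-64)*m^9*u01^9*u10^5*u11*u12 + (96)*m^9*u01^9*u10^5*u11^2 + (-1120)*m^9*u01^9*u10^5*u02*u20 + (480)*m^9*u01^9*u10^5*u02^2 + (-96)*m^9*u01^9*u10^6*u12 + (-304)*m^9*u01^9*u10^6*u11 + (80)*m^9*u01^9*u10^7 + (-64)*m^9*u01^10*u10^3*u11^2*u20 + (-64)*m^9*u01^10*u10^3*u02*u11^2 + (-64)*m^9*u01^10*u10^4*u20*u12 + (448)*m^9*u01^10*u10^4*u11*u20 + (64)*m^9*u01^10*u10^4*u02*u12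 + (-384)*m^9*u01^10*u10^4*u02*u11 + (448)*m^9*u01^10*u10^5*u20 + (-384)*m^9*u01^10*u10^5*u02 + (-64)*m^9*u01^11*u10^3*u11*u12 + (32)*m^9*u01^11*u10^3*u11^2 + (-32)*m^9*u01^11*u10^4*u12 + (240)*m^9*u01^11*u10^4*u11 + (48)*m^9*u01^11*u10^5 + (-64)*x*m^9*u01^5*u10^9*u02*u11 + (32)*x*m^9*u01^5*u10^10*u02 + (-128)*x*m^9*u01^6*u10^8*u11^2 + (128)*x*m^9*u01^6*u10^8*u02*u20 + (-128)*x*m^9*u01^6*u10^8*u02^2 + (-64)*x*m^9*u01^6*u10^9*u12 + (96)*x*m^9*u01^6*u10^9*u11 + (-832)*x*m^9*u01^7*u10^7*u11*u20 + (896)*x*m^9*u01^7*u10^7*u02*u11 + (512)*x*m^9*u01^7*u10^8*u20 + (-416)*x*m^9*u01^7*u10^8*u02 + (1152)*x*m^9*u01^8*u10^6*u20^2 + (-256)*x*m^9*u01^8*u10^6*u11^2 + (-2304)*x*m^9*u01^8*u10^6*u02*u20 + (1152)*x*m^9*u01^8*u10^6*u02^2 + (-192)*x*m^9*u01^8*u10^7*u12 + (288)*x*m^9*u01^8*u10^7*u11 + (128)*x*m^9*u01^8*u10^8 + (2176)*x*m^9*u01^9*u10^5*u11*u20 + (-2368)*x*m^9*u01^9*u10^5*u02*u11 + (1024)*x*m^9*u01^9*u10^6*u20 + (-928)*x*m^9*u01^9*u10^6*u02 + (384)*x*m^9*u01^10*u10^4*u20^2 + (2944)*x*m^9*u01^10*u10^4*u11^2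 + (-896)*x*m^9*u01^10*u10^4*u02*u20 + (512)*x*m^9*u01^10*u10^4*u02^2 + (-192)*x*m^9*u01^10*u10^5*u12 + (288)*x*m^9*u01^10*u10^5*u11 + (256)*x*m^9*u01^10*u10^6 + (-64)*x*m^9*u01^11*u10^3*u11*u20 + (-256)*x*m^9*u01^11*u10^3*u02*u11 + (512)*x*m^9*u01^11*u10^4*u20 + (-480)*x*m^9*u01^11*u10^4*u02 + (-64)*x*m^9*u01^12*u10^3*u12 + (96)*x*m^9*u01^12*u10^3*u11 + (128)*x*m^9*u01^12*u10^4 + (64)*x^2*m^9*u01^6*u10^9*u02 + (-512)*x^2*m^9*u01^7*u10^8*u11 + (320)*x^2*m^9*u01^7*u10^9 + (1280)*x^2*m^9*u01^8*u10^7*u20 + (-1344)*x^2*m^9*u01^8*u10^7*u02 + (1536)*x^2*m^9*u01^9*u10^6*u11 + (704)*x^2*m^9*u01^9*u10^7 + (1280)*x^2*m^9*u01^10*u10^5*u20 + (-1600)*x^2*m^9*u01^10*u10^5*u02 + (2048)*x^2*m^9*u01^11*u10^4*u11 + (448)*x^2*m^9*u01^11*u10^5 + (-192)*x^2*m^9*u01^12*u10^3*u02 + (64)*x^2*m^9*u01^13*u10^3 + (512)*x^3*m^9*u01^8*u10^8 + (1024)*x^3*m^9*u01^10*u10^6 + (512)*x^3*m^9*u01^12*u10^4.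
Definition P20 (x m u10 u01 u20 u11 u02 u30 u21 u12 u03 u40 u31 u22 u13 u04 : R) := (256)*m^10*u01^6*u10^9*u11^3 + (-128)*m^10*u01^6*u10^9*u02*u11*u20 + (128)*m^10*u01^6*u10^9*u02^2*u11 + (128)*m^10*u01^6*u10^10*u11*u12 + (-448)*m^10*u01^6*u10^10*u11^2 + (64)*m^10*u01^6*u10^10*u02*u20 + (-64)*m^10*u01^6*u10^10*u02^2 + (-64)*m^10*u01^6*u10^11*u12 + (224)*m^10*u01^6*u10^11*u11 + (-32)*m^10*u01^6*u10^12 + (-128)*m^10*u01^7*u10^8*u11^2*u20 + (128)*m^10*u01^7*u10^8*u02*u20^2 + (384)*m^10*u01^7*u10^8*u02*u11^2 + (-256)*m^10*u01^7*u10^8*u02^2*u20 + (128)*m^10*u01^7*u10^8*u02^3 + (-128)*m^10*u01^7*u10^9*u20*u12 + (128)*m^10*u01^7*u10^9*u11*u20 + (128)*m^10*u01^7*u10^9*u02*u12 + (-512)*m^10*u01^7*u10^9*u02*u11 + (128)*m^10*u01^7*u10^10*u02 + (-128)*m^10*u01^8*u10^7*u11*u20^2 + (-3072)*m^10*u01^8*u10^7*u11^3 + (1536)*m^10*u01^8*u10^7*u02*u11*u20 + (-640)*m^10*u01^8*u10^7*u02^2*u11 + (128)*m^10*u01^8*u10^8*u20^2 + (128)*m^10*u01^8*u10^8*u11*u12 + (2752)*m^10*u01^8*u10^8*u11^2 + (-640)*m^10*u01^8*u10^8*u02*u20 + (128)*m^10*u01^8*u10^8*u02^2 + (-192)*m^10*u01^8*u10^9*u12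 + (-864)*m^10*u01^8*u10^9*u11 + (32)*m^10*u01^8*u10^10 + (2816)*m^10*u01^9*u10^6*u11^2*u20 + (-1408)*m^10*u01^9*u10^6*u02*u20^2 + (-2816)*m^10*u01^9*u10^6*u02*u11^2 + (2048)*m^10*u01^9*u10^6*u02^2*u20 + (-640)*m^10*u01^9*u10^6*u02^3 + (-256)*m^10*u01^9*u10^7*u20*u12 + (-2048)*m^10*u01^9*u10^7*u11*u20 + (256)*m^10*u01^9*u10^7*u02*u12 + (1792)*m^10*u01^9*u10^7*u02*u11 + (896)*m^10*u01^9*u10^8*u20 + (-640)*m^10*u01^9*u10^8*u02 + (-128)*m^10*u01^10*u10^5*u11*u20^2 + (2816)*m^10*u01^10*u10^5*u11^3 + (-1408)*m^10*u01^10*u10^5*u02*u11*u20 + (768)*m^10*u01^10*u10^5*u02^2*u11 + (896)*m^10*u01^10*u10^6*u20^2 + (-128)*m^10*u01^10*u10^6*u11*u12 + (192)*m^10*u01^10*u10^6*u11^2 + (-2240)*m^10*u01^10*u10^6*u02*u20 + (960)*m^10*u01^10*u10^6*u02^2 + (-192)*m^10*u01^10*u10^7*u12 + (-608)*m^10*u01^10*u10^7*u11 + (160)*m^10*u01^10*u10^8 + (-128)*m^10*u01^11*u10^4*u11^2*u20 + (-128)*m^10*u01^11*u10^4*u02*u11^2 + (-128)*m^10*u01^11*u10^5*u20*u12 + (896)*m^10*u01^11*u10^5*u11*u20 + (128)*m^10*u01^11*u10^5*u02*u12 + (-768)*m^10*u01^11*u10^5*u02*u11 + (896)*m^10*u01^11*u10^6*u20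 + (-768)*m^10*u01^11*u10^6*u02 + (-128)*m^10*u01^12*u10^4*u11*u12 + (64)*m^10*u01^12*u10^4*u11^2 + (-64)*m^10*u01^12*u10^5*u12 + (480)*m^10*u01^12*u10^5*u11 + (96)*m^10*u01^12*u10^6 + (-128)*x*m^10*u01^6*u10^10*u02*u11 + (64)*x*m^10*u01^6*u10^11*u02 + (-256)*x*m^10*u01^7*u10^9*u11^2 + (256)*x*m^10*u01^7*u10^9*u02*u20 + (-256)*x*m^10*u01^7*u10^9*u02^2 + (-128)*x*m^10*u01^7*u10^10*u12 + (192)*x*m^10*u01^7*u10^10*u11 + (-1664)*x*m^10*u01^8*u10^8*u11*u20 + (1792)*x*m^10*u01^8*u10^8*u02*u11 + (1024)*x*m^10*u01^8*u10^9*u20 + (-832)*x*m^10*u01^8*u10^9*u02 + (1536)*x*m^10*u01^9*u10^7*u20^2 + (-512)*x*m^10*u01^9*u10^7*u11^2 + (-4608)*x*m^10*u01^9*u10^7*u02*u20 + (2304)*x*m^10*u01^9*u10^7*u02^2 + (-384)*x*m^10*u01^9*u10^8*u12 + (576)*x*m^10*u01^9*u10^8*u11 + (256)*x*m^10*u01^9*u10^9 + (4352)*x*m^10*u01^10*u10^6*u11*u20 + (-4736)*x*m^10*u01^10*u10^6*u02*u11 + (2048)*x*m^10*u01^10*u10^7*u20 + (-1856)*x*m^10*u01^10*u10^7*u02 + (5888)*x*m^10*u01^11*u10^5*u11^2 + (-1792)*x*m^10*u01^11*u10^5*u02*u20 + (1024)*x*m^10*u01^11*u10^5*u02^2 + (-384)*x*m^10*u01^11*u10^6*u12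 + (576)*x*m^10*u01^11*u10^6*u11 + (512)*x*m^10*u01^11*u10^7 + (-128)*x*m^10*u01^12*u10^4*u11*u20 + (-512)*x*m^10*u01^12*u10^4*u02*u11 + (1024)*x*m^10*u01^12*u10^5*u20 + (-960)*x*m^10*u01^12*u10^5*u02 + (-128)*x*m^10*u01^13*u10^4*u12 + (192)*x*m^10*u01^13*u10^4*u11 + (256)*x*m^10*u01^13*u10^5 + (128)*x^2*m^10*u01^7*u10^10*u02 + (-1024)*x^2*m^10*u01^8*u10^9*u11 + (640)*x^2*m^10*u01^8*u10^10 + (2560)*x^2*m^10*u01^9*u10^8*u20 + (-2688)*x^2*m^10*u01^9*u10^8*u02 + (3072)*x^2*m^10*u01^10*u10^7*u11 + (1408)*x^2*m^10*u01^10*u10^8 + (2560)*x^2*m^10*u01^11*u10^6*u20 + (-3200)*x^2*m^10*u01^11*u10^6*u02 + (4096)*x^2*m^10*u01^12*u10^5*u11 + (896)*x^2*m^10*u01^12*u10^6 + (-384)*x^2*m^10*u01^13*u10^4*u02 + (128)*x^2*m^10*u01^14*u10^4 + (1024)*x^3*m^10*u01^9*u10^9 + (2048)*x^3*m^10*u01^11*u10^7 + (1024)*x^3*m^10*u01^13*u10^5.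
Definition P21 (x m u10 u01 u20 u11 u02 u30 u21 u12 u03 u40 u31 u22 u13 u04 : R) := (512)*m^11*u01^7*u10^10*u11^3 + (256)*m^11*u01^7*u10^10*u02^2*u11 + (256)*m^11*u01^7*u10^11*u11*u12 + (-896)*m^11*u01^7*u10^11*u11^2 + (-128)*m^11*u01^7*u10^11*u02^2 + (-128)*m^11*u01^7*u10^12*u12 + (448)*m^11*u01^7*u10^12*u11 + (-64)*m^11*u01^7*u10^13 + (-512)*m^11*u01^8*u10^9*u11^2*u20 + (768)*m^11*u01^8*u10^9*u02*u11^2 + (-256)*m^11*u01^8*u10^9*u02^2*u20 + (256)*m^11*u01^8*u10^9*u02^3 + (-256)*m^11*u01^8*u10^10*u20*u12 + (640)*m^11*u01^8*u10^10*u11*u20 + (256)*m^11*u01^8*u10^10*u02*u12 + (-1024)*m^11*u01^8*u10^10*u02*u11 + (-128)*m^11*u01^8*u10^11*u20 + (256)*m^11*u01^8*u10^11*u02 + (-6144)*m^11*u01^9*u10^8*u11^3 + (-256)*m^11*u01^9*u10^8*u02*u11*u20 + (-1280)*m^11*u01^9*u10^8*u02^2*u11 + (256)*m^11*u01^9*u10^9*u11*u12 + (5504)*m^11*u01^9*u10^9*u11^2 + (256)*m^11*u01^9*u10^9*u02*u20 + (256)*m^11*u01^9*u10^9*u02^2 + (-384)*m^11*u01^9*u10^10*u12 + (-1728)*m^11*u01^9*u10^10*u11 + (64)*m^11*u01^9*u10^11 + (5632)*m^11*u01^10*u10^7*u11^2*u20 + (-5632)*m^11*u01^10*u10^7*u02*u11^2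 + (1280)*m^11*u01^10*u10^7*u02^2*u20 + (-1280)*m^11*u01^10*u10^7*u02^3 + (-512)*m^11*u01^10*u10^8*u20*u12 + (-2304)*m^11*u01^10*u10^8*u11*u20 + (512)*m^11*u01^10*u10^8*u02*u12 + (3584)*m^11*u01^10*u10^8*u02*u11 + (768)*m^11*u01^10*u10^9*u20 + (-1280)*m^11*u01^10*u10^9*u02 + (5632)*m^11*u01^11*u10^6*u11^3 + (-256)*m^11*u01^11*u10^6*u02*u11*u20 + (1536)*m^11*u01^11*u10^6*u02^2*u11 + (-256)*m^11*u01^11*u10^7*u11*u12 + (384)*m^11*u01^11*u10^7*u11^2 + (-1280)*m^11*u01^11*u10^7*u02*u20 + (1920)*m^11*u01^11*u10^7*u02^2 + (-384)*m^11*u01^11*u10^8*u12 + (-1216)*m^11*u01^11*u10^8*u11 + (320)*m^11*u01^11*u10^9 + (-256)*m^11*u01^12*u10^5*u02*u11^2 + (-256)*m^11*u01^12*u10^6*u20*u12 + (128)*m^11*u01^12*u10^6*u11*u20 + (256)*m^11*u01^12*u10^6*u02*u12 + (-1536)*m^11*u01^12*u10^6*u02*u11 + (896)*m^11*u01^12*u10^7*u20 + (-1536)*m^11*u01^12*u10^7*u02 + (-256)*m^11*u01^13*u10^5*u11*u12 + (128)*m^11*u01^13*u10^5*u11^2 + (-128)*m^11*u01^13*u10^6*u12 + (960)*m^11*u01^13*u10^6*u11 + (192)*m^11*u01^13*u10^7 + (-256)*x*m^11*u01^7*u10^11*u02*u11 + (128)*x*m^11*u01^7*u10^12*u02 + (-512)*x*m^11*u01^8*u10^10*u11^2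 + (256)*x*m^11*u01^8*u10^10*u02*u20 + (-512)*x*m^11*u01^8*u10^10*u02^2 + (-256)*x*m^11*u01^8*u10^11*u12 + (384)*x*m^11*u01^8*u10^11*u11 + (3584)*x*m^11*u01^9*u10^9*u02*u11 + (256)*x*m^11*u01^9*u10^10*u20 + (-1664)*x*m^11*u01^9*u10^10*u02 + (-1024)*x*m^11*u01^10*u10^8*u11^2 + (-3584)*x*m^11*u01^10*u10^8*u02*u20 + (4608)*x*m^11*u01^10*u10^8*u02^2 + (-768)*x*m^11*u01^10*u10^9*u12 + (1152)*x*m^11*u01^10*u10^9*u11 + (512)*x*m^11*u01^10*u10^10 + (6144)*x*m^11*u01^11*u10^7*u11*u20 + (-9472)*x*m^11*u01^11*u10^7*u02*u11 + (512)*x*m^11*u01^11*u10^8*u20 + (-3712)*x*m^11*u01^11*u10^8*u02 + (11776)*x*m^11*u01^12*u10^6*u11^2 + (-768)*x*m^11*u01^12*u10^6*u02*u20 + (2048)*x*m^11*u01^12*u10^6*u02^2 + (-768)*x*m^11*u01^12*u10^7*u12 + (1152)*x*m^11*u01^12*u10^7*u11 + (1024)*x*m^11*u01^12*u10^8 + (-1024)*x*m^11*u01^13*u10^5*u02*u11 + (256)*x*m^11*u01^13*u10^6*u20 + (-1920)*x*m^11*u01^13*u10^6*u02 + (-256)*x*m^11*u01^14*u10^5*u12 + (384)*x*m^11*u01^14*u10^5*u11 + (512)*x*m^11*u01^14*u10^6 + (256)*x^2*m^11*u01^8*u10^11*u02 + (-2048)*x^2*m^11*u01^9*u10^10*u11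 + (1280)*x^2*m^11*u01^9*u10^11 + (2048)*x^2*m^11*u01^10*u10^9*u20 + (-5376)*x^2*m^11*u01^10*u10^9*u02 + (6144)*x^2*m^11*u01^11*u10^8*u11 + (2816)*x^2*m^11*u01^11*u10^9 + (2048)*x^2*m^11*u01^12*u10^7*u20 + (-6400)*x^2*m^11*u01^12*u10^7*u02 + (8192)*x^2*m^11*u01^13*u10^6*u11 + (1792)*x^2*m^11*u01^13*u10^7 + (-768)*x^2*m^11*u01^14*u10^5*u02 + (256)*x^2*m^11*u01^15*u10^5 + (2048)*x^3*m^11*u01^10*u10^10 + (4096)*x^3*m^11*u01^12*u10^8 + (2048)*x^3*m^11*u01^14*u10^6.
Definition P22 (x m u10 u01 u20 u11 u02 u30 u21 u12 u03 u40 u31 u22 u13 u04 : R) := (-512)*m^12*u01^10*u10^12 + (-1024)*m^12*u01^12*u10^10 + (-512)*m^12*u01^14*u10^8 + (-1024)*x*m^12*u01^11*u10^11 + (-2048)*x*m^12*u01^13*u10^9 + (-1024)*x*m^12*u01^15*u10^7.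
Lemma step_P10 x m u10 u01 u20 u11 u02 u30 u21 u12 u03 u40 u31 u22 u13 u04 : (P10 x m u10 u01 u20 u11 u02 u30 u21 u12 u03 u40 u31 u22 u13 u04) = (m*u01) * (GxxLf x m u10 u01 u20 u11 u02 u30 u21 u12 u03 u40 u31 u22 u13 u04) - ((2)*m*u01*u10) * (GxLg x m u10 u01 u20 u11 u02 u30 u21 u12 u03 u40 u31 u22 u13 u04).
Proof. unfold P10, GxxLf, GxLg. ring. Qed.
Lemma step_P11 x m u10 u01 u20 u11 u02 u30 u21 u12 u03 u40 u31 u22 u13 u04 : (P11 x m u10 u01 u20 u11 u02 u30 u21 u12 u03 u40 u31 u22 u13 u04) = (m*u01) * (P10 x m u10 u01 u20 u11 u02 u30 u21 u12 u03 u40 u31 u22 u13 u04) - ((2)*m^2*u01^3) * (GyLg x m u10 u01 u20 u11 u02 u30 u21 u12 u03 u40 u31 u22 u13 u04).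
Proof. unfold P11, P10, GyLg. ring. Qed.
Lemma step_P12 x m u10 u01 u20 u11 u02 u30 u21 u12 u03 u40 u31 u22 u13 u04 : (P12 x m u10 u01 u20 u11 u02 u30 u21 u12 u03 u40 u31 u22 u13 u04) = (m*u01) * (GxyLf x m u10 u01 u20 u11 u02 u30 u21 u12 u03 u40 u31 u22 u13 u04) - ((2)*m*u01*u10) * (GyLg x m u10 u01 u20 u11 u02 u30 u21 u12 u03 u40 u31 u22 u13 u04).
Proof. unfold P12, GxyLf, GyLg. ring. Qed.
Lemma step_P13 x m u10 u01 u20 u11 u02 u30 u21 u12 u03 u40 u31 u22 u13 u04 : (P13 x m u10 u01 u20 u11 u02 u30 u21 u12 u03 u40 u31 u22 u13 u04) = ((2)*m*u01*u10) * (P11 x m u10 u01 u20 u11 u02 u30 u21 u12 u03 u40 u31 u22 u13 u04) - ((-2)*m^3*u01^3*u10) * (GyyLf x m u10 u01 u20 u11 u02 u30 u21 u12 u03 u40 u31 u22 u13 u04).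
Proof. unfold P13, P11, GyyLf. ring. Qed.
Lemma step_P14 x m u10 u01 u20 u11 u02 u30 u21 u12 u03 u40 u31 u22 u13 u04 : (P14 x m u10 u01 u20 u11 u02 u30 u21 u12 u03 u40 u31 u22 u13 u04) = ((2)*m*u01*u10) * (P12 x m u10 u01 u20 u11 u02 u30 u21 u12 u03 u40 u31 u22 u13 u04) - ((2)*m^2*u01^3) * (GyyLf x m u10 u01 u20 u11 u02 u30 u21 u12 u03 u40 u31 u22 u13 u04).
Proof. unfold P14, P12, GyyLf. ring. Qed.
Lemma step_P15 x m u10 u01 u20 u11 u02 u30 u21 u12 u03 u40 u31 u22 u13 u04 : (P15 x m u10 u01 u20 u11 u02 u30 u21 u12 u03 u40 u31 u22 u13 u04) = ((2)*m*u01*u10) * (GLg x m u10 u01 u20 u11 u02 u30 u21 u12 u03 u40 u31 u22 u13 u04) - (m*u01) * (GxLf x m u10 u01 u20 u11 u02 u30 u21 u12 u03 u40 u31 u22 u13 u04).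
Proof. unfold P15, GLg, GxLf. ring. Qed.
Lemma step_P16 x m u10 u01 u20 u11 u02 u30 u21 u12 u03 u40 u31 u22 u13 u04 : (P16 x m u10 u01 u20 u11 u02 u30 u21 u12 u03 u40 u31 u22 u13 u04) = ((2)*m*u01*u10) * (P15 x m u10 u01 u20 u11 u02 u30 u21 u12 u03 u40 u31 u22 u13 u04) - ((-2)*m^2*u01^3) * (GyLf x m u10 u01 u20 u11 u02 u30 u21 u12 u03 u40 u31 u22 u13 u04).
Proof. unfold P16, P15, GyLf. ring. Qed.
Lemma step_P17 x m u10 u01 u20 u11 u02 u30 u21 u12 u03 u40 u31 u22 u13 u04 : (P17 x m u10 u01 u20 u11 u02 u30 u21 u12 u03 u40 u31 u22 u13 u04) = ((2)*m*u01*u10) * (P13 x m u10 u01 u20 u11 u02 u30 u21 u12 u03 u40 u31 u22 u13 u04) - ((-4)*m^4*u01^3*u10^2*u11 + (2)*m^4*u01^3*u10^3 + (12)*m^4*u01^4*u10*u20 + (-8)*m^4*u01^4*u10*u02 + (6)*m^4*u01^5*u10 + (8)*x*m^4*u01^4*u10^2) * (GxLf x m u10 u01 u20 u11 u02 u30 u21 u12 u03 u40 u31 u22 u13 u04).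
Proof. unfold P17, P13, GxLf. ring. Qed.
Lemma step_P18 x m u10 u01 u20 u11 u02 u30 u21 u12 u03 u40 u31 u22 u13 u04 : (P18 x m u10 u01 u20 u11 u02 u30 u21 u12 u03 u40 u31 u22 u13 u04) = ((2)*m*u01*u10) * (P17 x m u10 u01 u20 u11 u02 u30 u21 u12 u03 u40 u31 u22 u13 u04) - ((-8)*m^5*u01^3*u10^4*u11 + (4)*m^5*u01^3*u10^5 + (8)*m^5*u01^4*u10^3*u20 + (-8)*m^5*u01^4*u10^3*u02 + (80)*m^5*u01^5*u10^2*u11 + (-16)*m^5*u01^5*u10^3 + (-24)*m^5*u01^6*u10*u20 + (16)*m^5*u01^6*u10*u02 + (-12)*m^5*u01^7*u10 + (8)*x*m^5*u01^4*u10^4 + (24)*x*m^5*u01^6*u10^2) * (GyLf x m u10 u01 u20 u11 u02 u30 u21 u12 u03 u40 u31 u22 u13 u04).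
Proof. unfold P18, P17, GyLf. ring. Qed.
Lemma step_P19 x m u10 u01 u20 u11 u02 u30 u21 u12 u03 u40 u31 u22 u13 u04 : (P19 x m u10 u01 u20 u11 u02 u30 u21 u12 u03 u40 u31 u22 u13 u04) = ((-4)*m^3*u01^2*u10^3 + (-4)*m^3*u01^4*u10) * (P18 x m u10 u01 u20 u11 u02 u30 u21 u12 u03 u40 u31 u22 u13 u04) - ((-16)*m^6*u01^4*u10^5*u11 + (8)*m^6*u01^4*u10^6 + (48)*m^6*u01^5*u10^4*u20 + (-64)*m^6*u01^5*u10^4*u02 + (176)*m^6*u01^6*u10^3*u11 + (-16)*m^6*u01^6*u10^4 + (-48)*m^6*u01^7*u10^2*u20 + (32)*m^6*u01^7*u10^2*u02 + (-24)*m^6*u01^8*u10^2 + (64)*x*m^6*u01^5*u10^5 + (64)*x*m^6*u01^7*u10^3) * (P16 x m u10 u01 u20 u11 u02 u30 u21 u12 u03 u40 u31 u22 u13 u04).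
Proof. unfold P19, P18, P16. ring. Qed.
Lemma step_P20 x m u10 u01 u20 u11 u02 u30 u21 u12 u03 u40 u31 u22 u13 u04 : (P20 x m u10 u01 u20 u11 u02 u30 u21 u12 u03 u40 u31 u22 u13 u04) = ((2)*m*u01*u10) * (P19 x m u10 u01 u20 u11 u02 u30 u21 u12 u03 u40 u31 u22 u13 u04) - ((384)*m^9*u01^8*u10^5*u20^2) * (GLf x m u10 u01 u20 u11 u02 u30 u21 u12 u03 u40 u31 u22 u13 u04).
Proof. unfold P20, P19, GLf. ring. Qed.
Lemma step_P21 x m u10 u01 u20 u11 u02 u30 u21 u12 u03 u40 u31 u22 u13 u04 : (P21 x m u10 u01 u20 u11 u02 u30 u21 u12 u03 u40 u31 u22 u13 u04) = ((2)*m*u01*u10) * (P20 x m u10 u01 u20 u11 u02 u30 u21 u12 u03 u40 u31 u22 u13 u04) - ((128)*m^10*u01^7*u10^8*u02*u20 + (-128)*m^10*u01^8*u10^7*u11*u20 + (128)*m^10*u01^8*u10^8*u20 + (-1408)*m^10*u01^9*u10^6*u02*u20 + (-128)*m^10*u01^10*u10^5*u11*u20 + (896)*m^10*u01^10*u10^6*u20 + (1536)*x*m^10*u01^9*u10^7*u20) * (GLf x m u10 u01 u20 u11 u02 u30 u21 u12 u03 u40 u31 u22 u13 u04).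
Proof. unfold P21, P20, GLf. ring. Qed.
Lemma step_P22 x m u10 u01 u20 u11 u02 u30 u21 u12 u03 u40 u31 u22 u13 u04 : (P22 x m u10 u01 u20 u11 u02 u30 u21 u12 u03 u40 u31 u22 u13 u04) = ((2)*m*u01*u10) * (P21 x m u10 u01 u20 u11 u02 u30 u21 u12 u03 u40 u31 u22 u13 u04) - ((-512)*m^11*u01^8*u10^9*u11^2 + (-256)*m^11*u01^8*u10^9*u02^2 + (-256)*m^11*u01^8*u10^10*u12 + (640)*m^11*u01^8*u10^10*u11 + (-128)*m^11*u01^8*u10^11 + (-256)*m^11*u01^9*u10^8*u02*u11 + (256)*m^11*u01^9*u10^9*u02 + (5632)*m^11*u01^10*u10^7*u11^2 + (1280)*m^11*u01^10*u10^7*u02^2 + (-512)*m^11*u01^10*u10^8*u12 + (-2304)*m^11*u01^10*u10^8*u11 + (768)*m^11*u01^10*u10^9 + (-256)*m^11*u01^11*u10^6*u02*u11 + (-1280)*m^11*u01^11*u10^7*u02 + (-256)*m^11*u01^12*u10^6*u12 + (128)*m^11*u01^12*u10^6*u11 + (896)*m^11*u01^12*u10^7 + (256)*x*m^11*u01^8*u10^10*u02 + (256)*x*m^11*u01^9*u10^10 + (-3584)*x*m^11*u01^10*u10^8*u02 + (6144)*x*m^11*u01^11*u10^7*u11 + (512)*x*m^11*u01^11*u10^8 + (-768)*x*m^11*u01^12*u10^6*u02 + (256)*x*m^11*u01^13*u10^6 + (2048)*x^2*m^11*u01^10*u10^9 + (2048)*x^2*m^11*u01^12*u10^7) * (GLf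 x m u10 u01 u20 u11 u02 u30 u21 u12 u03 u40 u31 u22 u13 u04).
Proof. unfold P22, P21, GLf. ring. Qed.
Lemma final_eq x m u10 u01 u20 u11 u02 u30 u21 u12 u03 u40 u31 u22 u13 u04 : (P22 x m u10 u01 u20 u11 u02 u30 u21 u12 u03 u40 u31 u22 u13 u04) = (-512)*m^12*u01^10*u10^12 + (-1024)*m^12*u01^12*u10^10 + (-512)*m^12*u01^14*u10^8 + (-1024)*x*m^12*u01^11*u10^11 + (-2048)*x*m^12*u01^13*u10^9 + (-1024)*x*m^12*u01^15*u10^7.
Proof. unfold P22. ring. Qed.
Lemma cert x m u10 u01 u20 u11 u02 u30 u21 u12 u03 u40 u31 u22 u13 u04 : (GLf x m u10 u01 u20 u11 u02 u30 u21 u12 u03 u40 u31 u22 u13 u04) = 0 -> (GxLf x m u10 u01 u20 u11 u02 u30 u21 u12 u03 u40 u31 u22 u13 u04) = 0 -> (GyLf x m u10 u01 u20 u11 u02 u30 u21 u12 u03 u40 u31 u22 u13 u04) = 0 -> (GxxLf x m u10 u01 u20 u11 u02 u30 u21 u12 u03 u40 u31 u22 u13 u04) = 0 -> (GxyLf x m u10 u01 u20 u11 u02 u30 u21 u12 u03 u40 u31 u22 u13 u04) = 0 -> (GyyLf x m u10 u01 u20 u11 u02 u30 u21 u12 u03 u40 u31 u22 u13 u04) = 0 -> (GLg x m u10 u01 u20 u11 u02 u30 u21 u12 u03 u40 u31 u22 u13 u04) = 0 -> (GxLg x m u10 u01 u20 u11 u02 u30 u21 u12 u03 u40 u31 u22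 u13 u04) = 0 -> (GyLg x m u10 u01 u20 u11 u02 u30 u21 u12 u03 u40 u31 u22 u13 u04) = 0 -> (-512)*m^12*u01^10*u10^12 + (-1024)*m^12*u01^12*u10^10 + (-512)*m^12*u01^14*u10^8 + (-1024)*x*m^12*u01^11*u10^11 + (-2048)*x*m^12*u01^13*u10^9 + (-1024)*x*m^12*u01^15*u10^7 = 0.
Proof.
  intros HGLf HGxLf HGyLf HGxxLf HGxyLf HGyyLf HGLg HGxLg HGyLg.
  assert (HP10 : (P10 x m u10 u01 u20 u11 u02 u30 u21 u12 u03 u40 u31 u22 u13 u04) = 0) by (rewrite step_P10, HGxxLf, HGxLg; ring).
  assert (HP11 : (P11 x m u10 u01 u20 u11 u02 u30 u21 u12 u03 u40 u31 u22 u13 u04) = 0) by (rewrite step_P11, HP10, HGyLg; ring).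
  assert (HP12 : (P12 x m u10 u01 u20 u11 u02 u30 u21 u12 u03 u40 u31 u22 u13 u04) = 0) by (rewrite step_P12, HGxyLf, HGyLg; ring).
  assert (HP13 : (P13 x m u10 u01 u20 u11 u02 u30 u21 u12 u03 u40 u31 u22 u13 u04) = 0) by (rewrite step_P13, HP11, HGyyLf; ring).
  assert (HP14 : (P14 x m u10 u01 u20 u11 u02 u30 u21 u12 u03 u40 u31 u22 u13 u04) = 0) by (rewrite step_P14, HP12, HGyyLf; ring).
  assert (HP15 : (P15 x m u10 u01 u20 u11 u02 u30 u21 u12 u03 u40 u31 u22 u13 u04) = 0) by (rewrite step_P15, HGLg, HGxLf; ring).
  assert (HP16 : (P16 x m u10 u01 u20 u11 u02 u30 u21 u12 u03 u40 u31 u22 u13 u04) = 0) by (rewrite step_P16, HP15, HGyLf; ring).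
  assert (HP17 : (P17 x m u10 u01 u20 u11 u02 u30 u21 u12 u03 u40 u31 u22 u13 u04) = 0) by (rewrite step_P17, HP13, HGxLf; ring).
  assert (HP18 : (P18 x m u10 u01 u20 u11 u02 u30 u21 u12 u03 u40 u31 u22 u13 u04) = 0) by (rewrite step_P18, HP17, HGyLf; ring).
  assert (HP19 : (P19 x m u10 u01 u20 u11 u02 u30 u21 u12 u03 u40 u31 u22 u13 u04) = 0) by (rewrite step_P19, HP18, HP16; ring).
  assert (HP20 : (P20 x m u10 u01 u20 u11 u02 u30 u21 u12 u03 u40 u31 u22 u13 u04) = 0) by (rewrite step_P20, HP19, HGLf; ring).
  assert (HP21 : (P21 x m u10 u01 u20 u11 u02 u30 u21 u12 u03 u40 u31 u22 u13 u04) = 0) by (rewrite step_P21, HP20, HGLf; ring).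
  assert (HP22 : (P22 x m u10 u01 u20 u11 u02 u30 u21 u12 u03 u40 u31 u22 u13 u04) = 0) by (rewrite step_P22, HP21, HGLf; ring).
  rewrite <- (final_eq x m u10 u01 u20 u11 u02 u30 u21 u12 u03 u40 u31 u22 u13 u04). exact HP22.
Qed.

Lemma cert2 x m u10 u01 u20 u11 u02 u30 u21 u12 u03 u40 u31 u22 u13 u04 :
  GLf x m u10 u01 u20 u11 u02 u30 u21 u12 u03 u40 u31 u22 u13 u04 = 0 -> GxLf x m u10 u01 u20 u11 u02 u30 u21 u12 u03 u40 u31 u22 u13 u04 = 0 -> GyLf x m u10 u01 u20 u11 u02 u30 u21 u12 u03 u40 u31 u22 u13 u04 = 0 -> GxxLf x m u10 u01 u20 u11 u02 u30 u21 u12 u03 u40 u31 u22 u13 u04 = 0 -> GxyLf x m u10 u01 u20 u11 u02 u30 u21 u12 u03 u40 u31 u22 u13 u04 = 0 -> GyyLf x m u10 u01 u20 u11 u02 u30 u21 u12 u03 u40 u31 u22 u13 u04 = 0 ->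
  GLg x m u10 u01 u20 u11 u02 u30 u21 u12 u03 u40 u31 u22 u13 u04 = 0 -> GxLg x m u10 u01 u20 u11 u02 u30 u21 u12 u03 u40 u31 u22 u13 u04 = 0 -> GyLg x m u10 u01 u20 u11 u02 u30 u21 u12 u03 u40 u31 u22 u13 u04 = 0 -> u10 <> 0 -> u01 <> 0 -> 0 < m -> u10 + 2 * x * u01 = 0.
Proof.
  intros H1 H2 H3 H4 H5 H6 H7 H8 H9 Hu1 Hu2 Hm.
  pose proof (cert x m u10 u01 u20 u11 u02 u30 u21 u12 u03 u40 u31 u22 u13 u04 H1 H2 H3 H4 H5 H6 H7 H8 H9) as H.
  assert (E : -512 * m^12 * u10^7 * u01^10 * (u10^2 + u01^2)^2 * (u10 + 2 * x * u01) = 0).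
  { rewrite <- H. ring. }
  assert (Hs : 0 < u10^2 + u01^2).
  { assert (0 < u10 * u10) by (destruct (Rlt_or_le 0 u10); nra). assert (0 <= u01 * u01) by nra. simpl. lra. }
  destruct (Req_dec (u10 + 2 * x * u01) 0) as [Z|Z]; auto.
  exfalso. revert E. repeat apply Rmult_integral_contrapositive_currified; try apply pow_nonzero; lra.
Qed.

Lemma final2 x m u10 u01 u20 u11 u02 u30 u21 u12 u03 u40 u31 u22 u13 u04 : GLf x m u10 u01 u20 u11 u02 u30 u21 u12 u03 u40 u31 u22 u13 u04 = 0 -> u10 + 2 * x * u01 = 0 -> u20 + 2 * u01 + 2 * x * u11 = 0 -> u11 + 2 * x * u02 = 0 ->
  x * m * u01^3 = 0.
Proof.
  intros H R1 R2 R3.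
  assert (E1 : u10 = -2 * x * u01) by lra.
  assert (E3 : u11 = -2 * x * u02) by lra.
  assert (E2 : u20 = -2 * u01 - 2 * x * u11) by lra.
  unfold GLf in H. rewrite E2 in H. rewrite E1, E3 in H.
  apply (Rmult_eq_reg_l 8). rewrite Rmult_0_r. rewrite <- H. ring. lra.
Qed.

Lemma final3 x m u10 u01 u20 u11 u02 u30 u21 u12 u03 u40 u31 u22 u13 u04 : GLf x m u10 u01 u20 u11 u02 u30 u21 u12 u03 u40 u31 u22 u13 u04 = 0 -> u10 = 0 -> u11 = 0 -> x * m * u01^3 = 0.
Proof.
  intros H R1 R2. unfold GLf in H. subst u10 u11.
  apply (Rmult_eq_reg_l 2). rewrite Rmult_0_r. rewrite <- H. ring. lra.
Qed.

Definition LE (e : ex) := EAdd (EMul (EJ 0 1) (dX e)) (EMul (EC (-1)) (EMul (EJ 1 0) (dY e))).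
Definition RE := EAdd (EJ 1 0) (EMul (EMul (EC 2) EX) (EJ 0 1)).

Definition F16 := R -> R -> R -> R -> R -> R -> R -> R -> R -> R -> R -> R -> R -> R -> R -> R -> R.

Section Main.
Variable I : R * R -> R.
Hypothesis HA : real_analytic2 I.

Notation ap F q := (F (fst q) (mu q) (J I 1 0 q) (J I 0 1 q) (J I 2 0 q) (J I 1 1 q) (J I 0 2 q)
    (J I 3 0 q) (J I 2 1 q) (J I 1 2 q) (J I 0 3 q) (J I 4 0 q) (J I 3 1 q) (J I 2 2 q) (J I 1 3 q) (J I 0 4 q)) (only parsing).

Lemma LC (e : ex) : (forall p q, same_level_component I p q -> ev I e p = ev I e q) ->
  forall p, J I 0 1 p <> 0 -> ev I (LE e) p = 0.
Proof.
  intros Hs [x0 y0] Hne.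
  pose proof (level_gen I (J I 1 0) (J I 0 1) (ev I e) (ev I (dX e)) (ev I (dY e)) x0 y0
    (fun q => J_dx I HA 0 0 q) (fun q => J_dy I HA 0 0 q) (fun q => ev_dX I HA e q) (fun q => ev_dY I HA e q)
    (fun q => J_cont I HA 0 0 q) (fun q => J_cont I HA 1 0 q) (fun q => J_cont I HA 0 1 q)
    (fun q => ev_cont I HA (dX e) q) (fun q => ev_cont I HA (dY e) q)) as H.
  assert (E : ev I (dX e) (x0, y0) * J I 0 1 (x0, y0) - ev I (dY e) (x0, y0) * J I 1 0 (x0, y0) = 0).
  { apply H; auto. intros q Hq. symmetry. apply Hs; auto. }
  unfold LE. cbn [ev]. rewrite <- E. ring.
Qed.

Lemma D_uniq2 (f : R -> R) x a b : is_derive f x a -> is_derive f x b -> a = b.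
Proof. intros H1 H2. apply D_unique in H1. apply D_unique in H2. rewrite <- H1, <- H2. reflexivity. Qed.

Lemma zero_prop (E : ex) p0 r : (forall q, inbox p0 r q -> ev I E q = 0) ->
  forall q, inbox p0 r q -> ev I (dX E) q = 0 /\ ev I (dY E) q = 0.
Proof.
  intros HZ q Hq. destruct (inbox_open _ _ _ Hq) as [e [He He']]. split.
  - assert (H1 : is_derive (fun t : R => ev I E (t, snd q)) (fst q) 0).
    { apply (D_ext_loc (fun _ => 0)) with e; auto.
      intros t Ht. symmetry. apply HZ. apply He'. exact Ht. change (Rabs (snd q - snd q) < e). rewrite Rminus_diag, Rabs_R0; lra.
      apply D_const. }
    pose proof (ev_dX I HA E q) as H2.
    exact (D_uniq2 _ _ _ _ H2 H1).
  - assert (H1 : is_derive (fun t : R => ev I E (fst q, t)) (snd q) 0).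
    { apply (D_ext_loc (fun _ => 0)) with e; auto.
      intros t Ht. symmetry. apply HZ. apply He'. change (Rabs (fst q - fst q) < e). rewrite Rminus_diag, Rabs_R0; lra. exact Ht.
      apply D_const. }
    pose proof (ev_dY I HA E q) as H2.
    exact (D_uniq2 _ _ _ _ H2 H1).
Qed.

Lemma nz_box F p : cont2 F p -> F p <> 0 -> exists r, 0 < r /\ forall q, inbox p r q -> F q <> 0.
Proof.
  intros HC Hne. destruct (HC (Rabs (F p)) (Rabs_pos_lt _ Hne)) as [d [Hd H]].
  exists d. split; auto. intros q [H1 H2] E. specialize (H q H1 H2). rewrite E, Rminus_0_l, Rabs_Ropp in H. lra.
Qed.

Lemma inbox_mono p r r' q : r <= r' -> inbox p r q -> inbox p r' q.
Proof. intros H [H1 H2]. split; lra. Qed.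

Lemma two_points p r : 0 < r -> (forall q, inbox p r q -> fst q = 0) -> False.
Proof.
  intros Hr H.
  assert (H1 := H p ltac:(split; rewrite Rminus_diag, Rabs_R0; lra)).
  assert (H2 := H (fst p + r / 2, snd p) ltac:(split; simpl; [replace (fst p + r / 2 - fst p) with (r/2) by ring; rewrite Rabs_pos_eq; lra | rewrite Rminus_diag, Rabs_R0; lra])).
  simpl in H2. lra.
Qed.

Lemma mu_pos q : 0 < mu q.
Proof. apply exp_pos. Qed.

Lemma e_GLf q : ev I (LE fE) q = ap GLf q.
Proof. unfold GLf, LE, fE. cbn [ev dX dY]. ring. Qed.
Lemma e_GxLf q : ev I (dX (LE fE)) q = ap GxLf q.
Proof. unfold GxLf, LE, fE. cbn [ev dX dY]. ring. Qed.
Lemma e_GyLf q : ev I (dY (LE fE)) q = ap GyLf q.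
Proof. unfold GyLf, LE, fE. cbn [ev dX dY]. ring. Qed.
Lemma e_GxxLf q : ev I (dX (dX (LE fE))) q = ap GxxLf q.
Proof. unfold GxxLf, LE, fE. cbn [ev dX dY]. ring. Qed.
Lemma e_GxyLf q : ev I (dX (dY (LE fE))) q = ap GxyLf q.
Proof. unfold GxyLf, LE, fE. cbn [ev dX dY]. ring. Qed.
Lemma e_GyyLf q : ev I (dY (dY (LE fE))) q = ap GyyLf q.
Proof. unfold GyyLf, LE, fE. cbn [ev dX dY]. ring. Qed.
Lemma e_GLg q : ev I (LE gE) q = ap GLg q.
Proof. unfold GLg, LE, gE. cbn [ev dX dY]. ring. Qed.
Lemma e_GxLg q : ev I (dX (LE gE)) q = ap GxLg q.
Proof. unfold GxLg, LE, gE. cbn [ev dX dY]. ring. Qed.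
Lemma e_GyLg q : ev I (dY (LE gE)) q = ap GyLg q.
Proof. unfold GyLg, LE, gE. cbn [ev dX dY]. ring. Qed.

End Main.

Section Final.
Variable I : R * R -> R.
Hypothesis HA : real_analytic2 I.
Hypothesis Hlev : forall p q, same_level_component I p q ->
  grad_norm2 conf_factor zero_fun conf_factor I p = grad_norm2 conf_factor zero_fun conf_factor I q /\
  laplace_beltrami conf_factor zero_fun conf_factor I p = laplace_beltrami conf_factor zero_fun conf_factor I q.

Lemma Hsf p q : same_level_component I p q -> ev I fE p = ev I fE q.
Proof. intro H. rewrite <- (grad_ev I p), <- (grad_ev I q). exact (proj1 (Hlev p q H)). Qed.
Lemma Hsg p q : same_level_component I p q -> ev I gE p = ev I gE q.
Proof. intro H. rewrite <- (lap_ev I p), <- (lap_ev I q). exact (proj2 (Hlev p q H)). Qed.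

Lemma case_i p : J I 1 0 p <> 0 -> J I 0 1 p <> 0 -> False.
Proof.
  intros H1 H2.
  destruct (nz_box _ p (J_cont I HA 1 0 p) H1) as [r1 [Hr1 B1]].
  destruct (nz_box _ p (J_cont I HA 0 1 p) H2) as [r2 [Hr2 B2]].
  set (r := Rmin r1 r2).
  assert (Hr : 0 < r) by (apply Rmin_pos; auto).
  assert (Hb1 : forall q, inbox p r q -> J I 1 0 q <> 0) by (intros q Hq; apply B1; eapply inbox_mono; [apply Rmin_l | eauto]).
  assert (Hb2 : forall q, inbox p r q -> J I 0 1 q <> 0) by (intros q Hq; apply B2; eapply inbox_mono; [apply Rmin_r | eauto]).
  assert (Zf : forall q, inbox p r q -> ev I (LE fE) q = 0) by (intros q Hq; apply (LC I HA); [exact Hsf | apply Hb2; exact Hq]).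
  assert (Zg : forall q, inbox p r q -> ev I (LE gE) q = 0) by (intros q Hq; apply (LC I HA); [exact Hsg | apply Hb2; exact Hq]).
  pose proof (zero_prop I HA (LE fE) p r Zf) as Z1.
  assert (Z2 := zero_prop I HA (dX (LE fE)) p r (fun q Hq => proj1 (Z1 q Hq))).
  assert (Z3 := zero_prop I HA (dY (LE fE)) p r (fun q Hq => proj2 (Z1 q Hq))).
  pose proof (zero_prop I HA (LE gE) p r Zg) as Z4.
  assert (ZR : forall q, inbox p r q -> ev I RE q = 0).
  { intros q Hq.
    pose proof (cert2 (fst q) (mu q) (J I 1 0 q) (J I 0 1 q) (J I 2 0 q) (J I 1 1 q) (J I 0 2 q)
    (J I 3 0 q) (J I 2 1 q) (J I 1 2 q) (J I 0 3 q) (J I 4 0 q) (J I 3 1 q) (J I 2 2 q) (J I 1 3 q) (J I 0 4 q)) as C.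
    rewrite <- (e_GLf I q), <- (e_GxLf I q), <- (e_GyLf I q), <- (e_GxxLf I q), <- (e_GxyLf I q), <- (e_GyyLf I q),
      <- (e_GLg I q), <- (e_GxLg I q), <- (e_GyLg I q) in C.
    replace (ev I RE q) with (J I 1 0 q + 2 * fst q * J I 0 1 q) by (unfold RE; cbn [ev]; ring).
    exact (C (Zf q Hq) (proj1 (Z1 q Hq)) (proj2 (Z1 q Hq)) (proj1 (Z2 q Hq)) (proj1 (Z3 q Hq)) (proj2 (Z3 q Hq))
      (Zg q Hq) (proj1 (Z4 q Hq)) (proj2 (Z4 q Hq)) (Hb1 q Hq) (Hb2 q Hq) (mu_pos q)). }
  pose proof (zero_prop I HA RE p r ZR) as Z5.
  apply (two_points p r Hr). intros q Hq.
  assert (F := final2 (fst q) (mu q) (J I 1 0 q) (J I 0 1 q) (J I 2 0 q) (J I 1 1 q) (J I 0 2 q)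
    (J I 3 0 q) (J I 2 1 q) (J I 1 2 q) (J I 0 3 q) (J I 4 0 q) (J I 3 1 q) (J I 2 2 q) (J I 1 3 q) (J I 0 4 q)).
  rewrite <- (e_GLf I q) in F.
  assert (E1 := ZR q Hq). destruct (Z5 q Hq) as [E2 E3].
  unfold RE in E1, E2, E3. cbn [ev dX dY] in E1, E2, E3.
  assert (E2' : J I 2 0 q + 2 * J I 0 1 q + 2 * fst q * J I 1 1 q = 0) by (rewrite <- E2; ring).
  assert (E3' : J I 1 1 q + 2 * fst q * J I 0 2 q = 0) by (rewrite <- E3; ring).
  specialize (F (Zf q Hq) E1 E2' E3').
  assert (Hm := mu_pos q). assert (Hu := Hb2 q Hq).
  destruct (Rmult_integral _ _ F) as [F1|F1].
  - destruct (Rmult_integral _ _ F1) as [F2|F2]; auto. lra.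
  - exfalso. apply Hu. apply (pow_nonzero (J I 0 1 q) 3) in Hu. contradiction.
Qed.

Lemma case_iia p : J I 0 1 p <> 0 -> (forall q, J I 1 0 q = 0 \/ J I 0 1 q = 0) -> False.
Proof.
  intros H2 Hor.
  destruct (nz_box _ p (J_cont I HA 0 1 p) H2) as [r [Hr Hb2]].
  assert (Z0 : forall q, inbox p r q -> ev I (EJ 1 0) q = 0).
  { intros q Hq. cbn [ev]. destruct (Hor q); auto. exfalso; apply (Hb2 q Hq); auto. }
  pose proof (zero_prop I HA (EJ 1 0) p r Z0) as Z1.
  assert (Zf : forall q, inbox p r q -> ev I (LE fE) q = 0) by (intros q Hq; apply (LC I HA); [exact Hsf | apply Hb2; exact Hq]).
  apply (two_points p r Hr). intros q Hq.
  assert (F := final3 (fst q) (mu q) (J I 1 0 q) (J I 0 1 q) (J I 2 0 q) (J I 1 1 q) (J I 0 2 q)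
    (J I 3 0 q) (J I 2 1 q) (J I 1 2 q) (J I 0 3 q) (J I 4 0 q) (J I 3 1 q) (J I 2 2 q) (J I 1 3 q) (J I 0 4 q)).
  rewrite <- (e_GLf I q) in F.
  specialize (F (Zf q Hq) (Z0 q Hq) (proj2 (Z1 q Hq))).
  assert (Hm := mu_pos q). assert (Hu := Hb2 q Hq).
  destruct (Rmult_integral _ _ F) as [F1|F1].
  - destruct (Rmult_integral _ _ F1) as [F3|F3]; auto. lra.
  - exfalso. apply (pow_nonzero (J I 0 1 q) 3) in Hu. contradiction.
Qed.

Lemma case_iib p : J I 1 0 p <> 0 -> (forall q, J I 1 0 q = 0 \/ J I 0 1 q = 0) -> False.
Proof.
  intros H1 Hor. destruct p as [x0 y0].
  destruct (nz_box _ (x0, y0) (J_cont I HA 1 0 (x0, y0)) H1) as [r [Hr Hb1]].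
  assert (Z0 : forall q, inbox (x0, y0) r q -> ev I (EJ 0 1) q = 0).
  { intros q Hq. cbn [ev]. destruct (Hor q); auto. exfalso; apply (Hb1 q Hq); auto. }
  pose proof (zero_prop I HA (EJ 0 1) (x0, y0) r Z0) as Z1.
  set (y1 := y0 + r / 2).
  assert (Hin : forall t, y0 <= t <= y1 -> inbox (x0, y0) r (x0, t)).
  { intros t Ht. split; simpl. rewrite Rminus_diag, Rabs_R0; lra. rewrite Rabs_pos_eq; unfold y1 in *; lra. }
  assert (Hconst : forall t, y0 <= t <= y1 -> I (x0, t) = I (x0, y0)).
  { intros t Ht. destruct (mvt (fun s => I (x0, s)) (fun s => J I 0 1 (x0, s)) y0 t) as [c [Hc E]].
    - intros s Hs. exact (J_dy I HA 0 0 (x0, s)).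
    - rewrite Rmin_left, Rmax_right in Hc by lra.
      assert (J I 0 1 (x0, c) = 0) by (apply (Z0 (x0, c)); apply Hin; lra).
      rewrite H, Rmult_0_l in E. lra. }
  assert (Hslc : same_level_component I (x0, y0) (x0, y1)).
  { apply (path_level I (fun t => (x0, t)) y0 y1 (x0, y0) y0) with (s := y1); try (unfold y1; lra); auto.
    intros s Hs eps He. exists eps. split; auto. intros s' Hs'. simpl. rewrite Rminus_diag, Rabs_R0. lra. }
  assert (HJ10 : J I 1 0 (x0, y1) = J I 1 0 (x0, y0)).
  { destruct (mvt (fun s => J I 1 0 (x0, s)) (fun s => J I 1 1 (x0, s)) y0 y1) as [c [Hc E]].
    - intros s Hs. exact (J_dy I HA 1 0 (x0, s)).
    - rewrite Rmin_left, Rmax_right in Hc by (unfold y1; lra).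
      assert (J I 1 1 (x0, c) = 0) by (apply (proj1 (Z1 (x0, c) (Hin c Hc)))).
      rewrite H, Rmult_0_l in E. lra. }
  pose proof (Hsf _ _ Hslc) as E.
  unfold fE in E. cbn [ev] in E.
  rewrite HJ10 in E.
  assert (Ea : J I 0 1 (x0, y0) = 0) by (apply (Z0 (x0, y0)); apply Hin; unfold y1; lra).
  assert (Eb : J I 0 1 (x0, y1) = 0) by (apply (Z0 (x0, y1)); apply Hin; unfold y1; lra).
  rewrite Ea, Eb in E.
  assert (Hm : mu (x0, y0) = mu (x0, y1)).
  { assert (0 < J I 1 0 (x0, y0) * J I 1 0 (x0, y0)).
    { destruct (Rlt_or_le 0 (J I 1 0 (x0, y0))); [nra|]. destruct H; [nra| contradiction]. }
    apply (Rmult_eq_reg_r (J I 1 0 (x0, y0) * J I 1 0 (x0, y0) + 0 * 0)). exact E. lra. }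
  unfold mu in Hm. simpl in Hm. apply exp_inv in Hm. unfold y1 in Hm. lra.
Qed.

Lemma const_case : (forall p, J I 1 0 p = 0 /\ J I 0 1 p = 0) -> forall p, I p = I (0, 0).
Proof.
  intros H [x y].
  destruct (mvt (fun s => I (s, y)) (fun s => J I 1 0 (s, y)) 0 x) as [c [_ E1]].
  { intros s _. exact (J_dx I HA 0 0 (s, y)). }
  destruct (mvt (fun s => I (0, s)) (fun s => J I 0 1 (0, s)) 0 y) as [d [_ E2]].
  { intros s _. exact (J_dy I HA 0 0 (0, s)). }
  rewrite (proj1 (H (c, y))) in E1. rewrite (proj2 (H (0, d))) in E2. lra.
Qed.

End Final.

Theorem main_thm : forall I : R * R -> R,
    equilibrium_function conf_factor zero_fun conf_factor I ->
    exists c : R, forall p : R * R, I p = c.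
Proof.
  intros I [HA Hlev].
  destruct (classic (forall p, J I 1 0 p = 0 /\ J I 0 1 p = 0)) as [H|H].
  - exists (I (0, 0)). apply const_case; auto.
  - exfalso. apply not_all_ex_not in H. destruct H as [p Hp].
    destruct (classic (exists q, J I 1 0 q <> 0 /\ J I 0 1 q <> 0)) as [[q [Q1 Q2]]|Hno].
    + apply (case_i I HA Hlev q Q1 Q2).
    + assert (Hor : forall q, J I 1 0 q = 0 \/ J I 0 1 q = 0).
      { intro q. destruct (Req_dec (J I 1 0 q) 0); auto. destruct (Req_dec (J I 0 1 q) 0); auto.
        exfalso; apply Hno; exists q; auto. }
      destruct (Req_dec (J I 0 1 p) 0) as [E|E].
      * refine (case_iib I HA Hlev p _ Hor). intro E'. apply Hp. split; auto.
      * apply (case_iia I HA Hlev p); auto.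
Qed.

Theorem mainTheorem6 :
  forall I : R * R -> R,
    equilibrium_function conf_factor zero_fun conf_factor I ->
    exists c : R, forall p : R * R, I p = c.
Proof.
  exact main_thm.
Qed.
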